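(* Let $V$ admit $V^{(6)}(0)$ and satisfy $V(0)=V'(0)=0$, $V''(0)>0$. Moreover, let the origin be an isochronous center for $\ddot{x}=-V'(x)$. Then \[ V^{(4)}(0)=\frac{5\, V^{(3)}(0)^2}{3\, V''(0)}\,,\qquad V^{(6)}(0)=\frac{7\, V^{(3)}(0)\, V^{(5)}(0)}{V''(0)}-\frac{140\, V^{(3)}(0)^4}{9\, V''(0)^3}\,. \]
   Context: $V$ is a $C^1$ function near $0$ in $\mathbb{R}$ with $V(0)=V'(0)=0$ and $V''(0)>0$ (here $V$ is assumed to have as many derivatives as necessary). Let $J\ni 0$ be an open interval such that $V$ is strictly increasing on $J\cap\mathbb{R}_+$, strictly decreasing on $J\cap\mathbb{R}_-$, and for each $x\in J$ there is a unique $h(x)\in J$ with $V(h(x))=V(x)$ and $\mathrm{sgn}(h(x))=-\mathrm{sgn}(x)$ (the involution associated with $V$). Then all orbits of $\ddot x=-V'(x)$ which intersect the interval $J$ of the $x$-axis in the $x,\dot x$-plane are periodic and enclose $(0,0)$; the origin is called an isochronous center for $\ddot x=-V'(x)$ if all these orbits have the same period. Equivalently, $V(x)=\frac{V''(0)}{8}(x-h(x))^2$ for $x\in J$. *)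

(* Defs.v *)
From Stdlib Require Import Reals Lra.
From Coquelicot Require Import Coquelicot.
Open Scope R_scope.

Definition sgn (x : R) : R :=
  if Rlt_dec 0 x then 1 else if Rlt_dec x 0 then -1 else 0.

(* "V admits V^(6)(0)": the derivatives V', ..., V^(5) exist on a
   neighbourhood of 0 and V^(5) is differentiable at 0. *)
Definition admits_D6_at0 (V : R -> R) : Prop :=
  (exists d : R, 0 < d /\
     forall k : nat, (k <= 5)%nat -> forall x : R, Rabs x < d -> ex_derive_n V k x)
  /\ ex_derive_n V 6 0.

(* Standing assumptions on the open interval J = (alpha, beta) containing 0:
   V is C^1 on J, strictly increasing on J ∩ R+, strictly decreasing on
   J ∩ R-, and the involution h is well defined on J. *)
Definition in_J (alpha beta x : R) : Prop := alpha < x < beta.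

Definition standing_J (V : R -> R) (alpha beta : R) : Prop :=
  alpha < 0 < beta /\
  (forall x, in_J alpha beta x -> ex_derive V x /\ continuous (Derive V) x) /\
  (forall x y, in_J alpha beta x -> in_J alpha beta y -> 0 <= x -> x < y -> V x < V y) /\
  (forall x y, in_J alpha beta x -> in_J alpha beta y -> x < y -> y <= 0 -> V y < V x) /\
  (forall x, in_J alpha beta x ->
     exists! y, in_J alpha beta y /\ V y = V x /\ sgn y = - sgn x).

Definition is_solution (V : R -> R) (a : R) (x v : R -> R) : Prop :=
  (forall t, is_derive x t (v t)) /\
  (forall t, is_derive v t (- Derive V (x t))) /\
  x 0 = a /\ v 0 = 0.

Definition minimal_period (x : R -> R) (T : R) : Prop :=
  0 < T /\ (forall t, x (t + T) = x t) /\
  (forall S, 0 < S < T -> exists t, x (t + S) <> x t).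

Definition isochronous_center (V : R -> R) (alpha beta : R) : Prop :=
  exists T : R, 0 < T /\
    forall a, in_J alpha beta a -> a <> 0 ->
      (exists x v, is_solution V a x v) /\
      (forall x v, is_solution V a x v -> minimal_period x T).

(* Main.v *)
Require Import Defs.
From Stdlib Require Import Reals.
From Coquelicot Require Import Coquelicot.
Open Scope R_scope.
From Stdlib Require Import Lra Lia Psatz ClassicalEpsilon.

Definition small (n:nat) (f:R->R) : Prop :=
  forall eps, 0 < eps -> exists d, 0 < d /\
    forall x, Rabs x < d -> Rabs (f x) <= eps * Rabs x ^ n.

Lemma small_ext n f g : (forall x, f x = g x) -> small n f -> small n g.
Proof. intros E H eps He; destruct (H eps He) as [d [Hd H1]]; exists d; split; auto.
intros x Hx; rewrite <- E; auto. Qed.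

Lemma small_ext_loc n f g : (exists d, 0 < d /\ forall x, Rabs x < d -> f x = g x) -> small n f -> small n g.
Proof. intros [d0 [Hd0 E]] H eps He; destruct (H eps He) as [d [Hd H1]]; exists (Rmin d d0); split.
apply Rmin_pos; auto.
intros x Hx; rewrite <- E. apply H1. apply Rlt_le_trans with (1:=Hx); apply Rmin_l.
apply Rlt_le_trans with (1:=Hx); apply Rmin_r. Qed.

Lemma small_plus n f g : small n f -> small n g -> small n (fun x => f x + g x).
Proof. intros Hf Hg eps He.
destruct (Hf (eps/2)) as [d1 [Hd1 H1]]; [lra|].
destruct (Hg (eps/2)) as [d2 [Hd2 H2]]; [lra|].
exists (Rmin d1 d2); split. apply Rmin_pos; auto.
intros x Hx. assert (A1 := H1 x (Rlt_le_trans _ _ _ Hx (Rmin_l _ _))).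
assert (A2 := H2 x (Rlt_le_trans _ _ _ Hx (Rmin_r _ _))).
eapply Rle_trans. apply Rabs_triang. lra. Qed.

Lemma small_scal n c f : small n f -> small n (fun x => c * f x).
Proof. intros Hf eps He.
destruct (Hf (eps/(Rabs c + 1))) as [d [Hd H1]].
apply Rdiv_lt_0_compat; auto. pose proof (Rabs_pos c); lra.
exists d; split; auto. intros x Hx. rewrite Rabs_mult.
specialize (H1 x Hx). pose proof (Rabs_pos c). pose proof (pow_le (Rabs x) n (Rabs_pos x)).
assert (Rabs c * Rabs (f x) <= (Rabs c + 1) * Rabs (f x)). pose proof (Rabs_pos (f x)); nra.
eapply Rle_trans. apply H2.
replace (eps * Rabs x ^ n) with ((Rabs c + 1) * (eps / (Rabs c + 1) * Rabs x ^ n)) by (field; lra).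
apply Rmult_le_compat_l; lra. Qed.

Lemma small_opp n f : small n f -> small n (fun x => - f x).
Proof. intros H; apply small_ext with (fun x => -1 * f x). intros; ring. apply small_scal; auto. Qed.

Lemma small_minus n f g : small n f -> small n g -> small n (fun x => f x - g x).
Proof. intros Hf Hg. apply small_ext with (fun x => f x + - g x). intros; ring.
apply small_plus; auto. apply small_opp; auto. Qed.

Lemma small_le n f g : (exists d, 0 < d /\ forall x, Rabs x < d -> Rabs (f x) <= Rabs (g x)) -> small n g -> small n f.
Proof. intros [d0 [Hd0 E]] H eps He; destruct (H eps He) as [d [Hd H1]]; exists (Rmin d d0); split.
apply Rmin_pos; auto.
intros x Hx. eapply Rle_trans. apply E. apply Rlt_le_trans with (1:=Hx); apply Rmin_r.
apply H1. apply Rlt_le_trans with (1:=Hx); apply Rmin_l. Qed.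

Lemma small_weaken n f : small (S n) f -> small n f.
Proof. intros H eps He; destruct (H eps He) as [d [Hd H1]]; exists (Rmin d 1); split.
apply Rmin_pos; lra.
intros x Hx. eapply Rle_trans. apply H1. apply Rlt_le_trans with (1:=Hx); apply Rmin_l.
simpl. assert (Rabs x <= 1). pose proof (Rmin_r d 1); lra.
pose proof (pow_le (Rabs x) n (Rabs_pos x)). pose proof (Rabs_pos x).
assert (Rabs x * Rabs x ^ n <= Rabs x ^ n) by nra. nra. Qed.

Lemma small_weaken_le m n f : (m <= n)%nat -> small n f -> small m f.
Proof. intros Hle; induction Hle; auto. intros H; apply IHHle; apply small_weaken; auto. Qed.

Definition bnd (g : R -> R) := exists M d, 0 < d /\ forall x, Rabs x < d -> Rabs (g x) <= M.

Lemma cont_bnd g : continuous g 0 -> bnd g.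
Proof. intros Hc. apply continuity_pt_filterlim in Hc.
destruct (Hc 1 Rlt_0_1) as [d [Hd H]].
exists (Rabs (g 0) + 1), d; split; auto. intros x Hx.
assert (Rabs (g x - g 0) < 1). destruct (Req_dec x 0) as [->|Hx0]. rewrite Rminus_diag, Rabs_R0; lra.
apply H. split. split. red; auto. auto. simpl. unfold R_dist. rewrite Rminus_0_r; auto.
pose proof (Rabs_triang_inv (g x) (g 0)). lra. Qed.

Lemma small_bnd n f : small n f -> bnd f.
Proof. intros H. destruct (H 1 Rlt_0_1) as [d [Hd H1]]. exists 1, (Rmin d 1); split.
apply Rmin_pos; lra. intros x Hx. eapply Rle_trans. apply H1. apply Rlt_le_trans with (1:=Hx); apply Rmin_l.
rewrite Rmult_1_l. rewrite <- (pow1 n). apply pow_incr. split. apply Rabs_pos. pose proof (Rmin_r d 1); lra. Qed.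

Lemma small_mul_bnd n f g : small n f -> bnd g -> small n (fun x => f x * g x).
Proof. intros Hf [M [d0 [Hd0 Hg]]] eps He.
destruct (Hf (eps / (Rabs M + 1))) as [d [Hd H1]].
apply Rdiv_lt_0_compat; auto. pose proof (Rabs_pos M); lra.
exists (Rmin d d0); split. apply Rmin_pos; auto.
intros x Hx. rewrite Rabs_mult.
assert (A1 := H1 x (Rlt_le_trans _ _ _ Hx (Rmin_l _ _))).
assert (A2 := Hg x (Rlt_le_trans _ _ _ Hx (Rmin_r _ _))).
assert (A3 : Rabs (g x) <= Rabs M + 1). pose proof (Rle_abs M); lra.
pose proof (Rabs_pos (f x)); pose proof (Rabs_pos (g x)).
pose proof (pow_le (Rabs x) n (Rabs_pos x)).
eapply Rle_trans. apply Rmult_le_compat; eauto.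
replace (eps * Rabs x ^ n) with (eps / (Rabs M + 1) * Rabs x ^ n * (Rabs M + 1)) by (field; pose proof (Rabs_pos M); lra).
lra. Qed.

Lemma bnd_mul_small n f g : bnd g -> small n f -> small n (fun x => g x * f x).
Proof. intros Hg Hf. apply small_ext with (fun x => f x * g x). intros; ring. apply small_mul_bnd; auto. Qed.

Lemma small_xpow n Q : continuous Q 0 -> small n (fun x => x ^ (S n) * Q x).
Proof. intros Hc. apply cont_bnd in Hc. destruct Hc as [M [d0 [Hd0 HQ]]].
intros eps He. exists (Rmin d0 (eps / (Rabs M + 1))); split.
apply Rmin_pos; auto. apply Rdiv_lt_0_compat; auto. pose proof (Rabs_pos M); lra.
intros x Hx. rewrite Rabs_mult, <- RPow_abs. simpl.
assert (A2 := HQ x (Rlt_le_trans _ _ _ Hx (Rmin_l _ _))).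
assert (A3 : Rabs x <= eps / (Rabs M + 1)). pose proof (Rmin_r d0 (eps / (Rabs M + 1))); lra.
assert (A4 : Rabs (Q x) <= Rabs M + 1). pose proof (Rle_abs M); lra.
pose proof (Rabs_pos (Q x)). pose proof (pow_le (Rabs x) n (Rabs_pos x)). pose proof (Rabs_pos x).
assert (Rabs x * (Rabs M + 1) <= eps).
  apply Rmult_le_reg_r with (/ (Rabs M + 1)). apply Rinv_0_lt_compat. pose proof (Rabs_pos M); lra.
  rewrite Rmult_assoc, Rinv_r. rewrite Rmult_1_r. exact A3. pose proof (Rabs_pos M); lra.
assert (Rabs x * Rabs (Q x) <= eps) by nra.
nra. Qed.

Lemma small_comp n f g : small n f -> (exists C d, 0 < d /\ forall x, Rabs x < d -> Rabs (g x) <= C * Rabs x) ->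
  small n (fun x => f (g x)).
Proof. intros Hf [C [d0 [Hd0 Hg]]] eps He.
set (C' := Rabs C + 1).
assert (HC' : 0 < C') by (unfold C'; pose proof (Rabs_pos C); lra).
assert (HCn : 0 < C' ^ n) by (apply pow_lt; auto).
destruct (Hf (eps / C' ^ n)) as [d [Hd H1]]. apply Rdiv_lt_0_compat; auto.
exists (Rmin d0 (d / C')); split. apply Rmin_pos; auto. apply Rdiv_lt_0_compat; auto.
intros x Hx. assert (A1 := Hg x (Rlt_le_trans _ _ _ Hx (Rmin_l _ _))).
assert (A2 : Rabs (g x) <= C' * Rabs x).
  eapply Rle_trans. apply A1. apply Rmult_le_compat_r. apply Rabs_pos. unfold C'; pose proof (Rle_abs C); lra.
assert (A3 : C' * Rabs x < d).
  assert (Rabs x < d / C') by (eapply Rlt_le_trans; [apply Hx| apply Rmin_r]).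
  apply Rmult_lt_reg_r with (/ C'). apply Rinv_0_lt_compat; auto.
  replace (C' * Rabs x * / C') with (Rabs x) by (field; lra). exact H.
eapply Rle_trans. apply H1. lra.
replace (eps * Rabs x ^ n) with (eps / C' ^ n * (C' * Rabs x) ^ n).
apply Rmult_le_compat_l. apply Rlt_le, Rdiv_lt_0_compat; auto.
apply pow_incr. split; auto. apply Rabs_pos.
rewrite Rpow_mult_distr. field. lra. Qed.

Lemma small_div_x n f g h : small (S n) f -> h 0 = 0 ->
  (exists c d, 0 < c /\ 0 < d /\ forall x, x <> 0 -> Rabs x < d -> c * Rabs x <= Rabs (g x) /\ h x * g x = f x) ->
  small n h.
Proof. intros Hf H0 [c [d0 [Hc [Hd0 Hg]]]] eps He.
destruct (Hf (eps * c)) as [d [Hd H1]]. nra.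
exists (Rmin d d0); split. apply Rmin_pos; auto.
intros x Hx. destruct (Req_dec x 0) as [->|Hx0].
rewrite H0, Rabs_R0. apply Rmult_le_pos; [lra| apply pow_le; lra].
destruct (Hg x Hx0 (Rlt_le_trans _ _ _ Hx (Rmin_r _ _))) as [B1 B2].
assert (A1 := H1 x (Rlt_le_trans _ _ _ Hx (Rmin_l _ _))).
rewrite <- B2, Rabs_mult in A1. simpl in A1.
assert (Hax : 0 < Rabs x) by (apply Rabs_pos_lt; auto).
pose proof (Rabs_pos (h x)). pose proof (pow_le (Rabs x) n (Rabs_pos x)).
assert (Rabs (h x) * (c * Rabs x) <= eps * c * (Rabs x * Rabs x ^ n)).
 eapply Rle_trans; [|apply A1]. apply Rmult_le_compat_l; auto.
apply Rmult_le_reg_r with (c * Rabs x). nra. nra. Qed.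

Lemma small_up m (d:R) g g' p p' : 0 < d ->
  (forall x, Rabs x < d -> is_derive g x (g' x)) ->
  (forall x, is_derive p x (p' x)) -> g 0 = p 0 ->
  small m (fun x => g' x - p' x) -> small (S m) (fun x => g x - p x).
Proof. intros Hd Hg Hp H0 Hs eps He.
destruct (Hs eps He) as [d1 [Hd1 H1]]. exists (Rmin d d1); split. apply Rmin_pos; auto.
intros x Hx.
assert (Hxd : Rabs x < d) by (eapply Rlt_le_trans; [apply Hx|apply Rmin_l]).
assert (Hxd1 : Rabs x < d1) by (eapply Rlt_le_trans; [apply Hx|apply Rmin_r]).
assert (Hb : forall y, Rmin 0 x <= y <= Rmax 0 x -> Rabs y <= Rabs x).
 intros y [Hy1 Hy2]. unfold Rmin, Rmax in *. destruct (Rle_dec 0 x).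
 rewrite !Rabs_right; lra. rewrite !Rabs_left1; lra.
destruct (MVT_gen (fun y => g y - p y) 0 x (fun y => g' y - p' y)) as [c [Hc1 Hc2]].
- intros y Hy. apply (is_derive_minus g p). apply Hg. pose proof (Hb y (conj (Rlt_le _ _ (proj1 Hy)) (Rlt_le _ _ (proj2 Hy)))); lra. apply Hp.
- intros y Hy. apply continuity_pt_filterlim. apply (ex_derive_continuous (fun y => g y - p y)).
  eexists. apply (is_derive_minus g p). apply Hg. pose proof (Hb y Hy); lra. apply Hp.
- rewrite H0, Rminus_diag, Rminus_0_r in Hc2. rewrite Rminus_0_r in Hc2. rewrite Hc2, Rabs_mult.
  assert (Hcx := Hb c Hc1). simpl.
  assert (A := H1 c (Rle_lt_trans _ _ _ Hcx Hxd1)).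
  pose proof (Rabs_pos x). pose proof (Rabs_pos (g' c - p' c)).
  assert (eps * Rabs c ^ m <= eps * Rabs x ^ m). apply Rmult_le_compat_l. lra. apply pow_incr; split; auto. apply Rabs_pos.
  nra. Qed.

Lemma derive_small1 f l : is_derive f 0 l -> small 1 (fun x => f x - f 0 - l * x).
Proof. intros H. apply is_derive_Reals in H. intros eps He.
destruct (H eps He) as [d Hd]. exists d; split. apply cond_pos.
intros x Hx. destruct (Req_dec x 0) as [->|Hx0]. rewrite Rabs_R0. replace (f 0 - f 0 - l * 0) with 0 by ring. rewrite Rabs_R0; lra.
specialize (Hd x Hx0 Hx). rewrite Rplus_0_l in Hd. simpl. rewrite Rmult_1_r.
replace (f x - f 0 - l * x) with (((f x - f 0) / x - l) * x) by (field; auto).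
rewrite Rabs_mult. pose proof (Rabs_pos_lt x Hx0). nra. Qed.

Lemma small1_derive f l : f 0 = 0 -> small 1 (fun x => f x - l * x) -> is_derive f 0 l.
Proof. intros H0 H. apply is_derive_Reals. intros eps He.
destruct (H (eps/2)) as [d [Hd H1]]. lra. exists (mkposreal d Hd). intros h Hh0 Hh.
simpl in Hh. rewrite Rplus_0_l, H0, Rminus_0_r. specialize (H1 h Hh). simpl in H1.
replace (f h / h - l) with ((f h - l * h) / h) by (field; auto).
unfold Rdiv; rewrite Rabs_mult, Rabs_inv. pose proof (Rabs_pos_lt h Hh0).
apply Rle_lt_trans with (eps/2). apply Rmult_le_reg_r with (Rabs h); auto.
rewrite Rmult_assoc, Rinv_l; lra. lra. Qed.

Lemma small0_cont f : small 0 (fun x => f x - f 0) -> continuous f 0.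
Proof. intros H. apply continuity_pt_filterlim. intros eps He.
destruct (H (eps/2)) as [d [Hd H1]]. lra. exists d; split; auto. intros x [_ Hx].
simpl in Hx. unfold R_dist in Hx. rewrite Rminus_0_r in Hx. specialize (H1 x Hx). simpl in H1.
simpl. unfold R_dist. lra. Qed.

Lemma le_all_zero x : (forall e, 0 < e -> Rabs x <= e) -> x = 0.
Proof. intros H. destruct (Req_dec x 0); auto. exfalso.
specialize (H (Rabs x / 2)). assert (0 < Rabs x) by (apply Rabs_pos_lt; auto). lra. Qed.

Lemma exd_cont (f:R->R) x : ex_derive f x -> continuous f x.
Proof. intros H. apply (ex_derive_continuous f x H). Qed.


Record jet := mkjet {c0:R; c1:R; c2:R; c3:R; c4:R; c5:R}.
Definition ev (a:jet) (x:R) : R :=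
  c0 a + c1 a * x + c2 a * x^2 + c3 a * x^3 + c4 a * x^4 + c5 a * x^5.
Definition approx n (f:R->R) (a:jet) := small n (fun x => f x - ev a x).

Definition jmul (a b : jet) : jet :=
  mkjet (c0 a * c0 b)
        (c0 a * c1 b + c1 a * c0 b)
        (c0 a * c2 b + c1 a * c1 b + c2 a * c0 b)
        (c0 a * c3 b + c1 a * c2 b + c2 a * c1 b + c3 a * c0 b)
        (c0 a * c4 b + c1 a * c3 b + c2 a * c2 b + c3 a * c1 b + c4 a * c0 b)
        (c0 a * c5 b + c1 a * c4 b + c2 a * c3 b + c3 a * c2 b + c4 a * c1 b + c5 a * c0 b).
Definition jadd (a b : jet) : jet :=
  mkjet (c0 a + c0 b) (c1 a + c1 b) (c2 a + c2 b) (c3 a + c3 b) (c4 a + c4 b) (c5 a + c5 b).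
Definition jscal (c:R) (a : jet) : jet :=
  mkjet (c * c0 a) (c * c1 a) (c * c2 a) (c * c3 a) (c * c4 a) (c * c5 a).
Definition jconst (c:R) : jet := mkjet c 0 0 0 0 0.

Lemma ev_cont a x : continuous (ev a) x.
Proof. apply exd_cont. unfold ev. auto_derive. auto. Qed.

Lemma ev_mul a b x : ev a x * ev b x = ev (jmul a b) x + x ^ 6 *
  ((c1 a * c5 b + c2 a * c4 b + c3 a * c3 b + c4 a * c2 b + c5 a * c1 b)
  + (c2 a * c5 b + c3 a * c4 b + c4 a * c3 b + c5 a * c2 b) * x
  + (c3 a * c5 b + c4 a * c4 b + c5 a * c3 b) * x ^ 2
  + (c4 a * c5 b + c5 a * c4 b) * x ^ 3 + c5 a * c5 b * x ^ 4).
Proof. unfold ev, jmul; simpl. ring. Qed.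

Lemma approx_weaken m n f a : (m <= n)%nat -> approx n f a -> approx m f a.
Proof. intros; eapply small_weaken_le; eauto. Qed.

Lemma approx_ext n f g a : (forall x, f x = g x) -> approx n f a -> approx n g a.
Proof. intros E H. eapply small_ext; [|apply H]. intros; simpl; rewrite E; auto. Qed.

Lemma approx_ext_loc n f g a : (exists d, 0 < d /\ forall x, Rabs x < d -> f x = g x) -> approx n f a -> approx n g a.
Proof. intros [d [Hd E]] H. eapply small_ext_loc; [|apply H]. exists d; split; auto. intros; simpl; rewrite E; auto. Qed.

Lemma approx_jext n f a b : a = b -> approx n f a -> approx n f b.
Proof. intros ->; auto. Qed.

Lemma approx_add n f g a b : approx n f a -> approx n g b -> approx n (fun x => f x + g x) (jadd a b).
Proof. intros Hf Hg. eapply small_ext; [|apply (small_plus _ _ _ Hf Hg)].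
intros x; unfold ev, jadd; simpl; ring. Qed.

Lemma approx_scal n c f a : approx n f a -> approx n (fun x => c * f x) (jscal c a).
Proof. intros Hf. eapply small_ext; [|apply (small_scal _ c _ Hf)].
intros x; unfold ev, jscal; simpl; ring. Qed.

Lemma approx_const n c : approx n (fun _ => c) (jconst c).
Proof. intros eps He. exists 1; split; [lra|]. intros x _. unfold ev, jconst; simpl.
replace (c - _) with 0 by ring. rewrite Rabs_R0. apply Rmult_le_pos; [lra|apply pow_le, Rabs_pos]. Qed.

Lemma approx_ev n a : approx n (ev a) a.
Proof. intros eps He. exists 1; split; [lra|]. intros x _.
replace (ev a x - ev a x) with 0 by ring. rewrite Rabs_R0. apply Rmult_le_pos; [lra|apply pow_le, Rabs_pos]. Qed.

Lemma approx_mul n f g a b : (n <= 5)%nat -> approx n f a -> approx n g b ->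
  approx n (fun x => f x * g x) (jmul a b).
Proof. intros Hn Hf Hg.
set (Q := fun x => (c1 a * c5 b + c2 a * c4 b + c3 a * c3 b + c4 a * c2 b + c5 a * c1 b)
  + (c2 a * c5 b + c3 a * c4 b + c4 a * c3 b + c5 a * c2 b) * x
  + (c3 a * c5 b + c4 a * c4 b + c5 a * c3 b) * x ^ 2
  + (c4 a * c5 b + c5 a * c4 b) * x ^ 3 + c5 a * c5 b * x ^ 4).
eapply small_ext with (fun x => (f x - ev a x) * (g x - ev b x) + (f x - ev a x) * ev b x
   + ev a x * (g x - ev b x) + x ^ 6 * Q x).
{ intros x. pose proof (ev_mul a b x). fold (Q x) in H. lra. }
apply small_plus. apply small_plus. apply small_plus.
- apply small_mul_bnd; auto. eapply small_bnd; eauto.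
- apply small_mul_bnd; auto. apply cont_bnd, ev_cont.
- apply bnd_mul_small; auto. apply cont_bnd, ev_cont.
- apply small_weaken_le with 5%nat; auto. apply small_xpow.
  apply exd_cont. unfold Q. auto_derive. auto. Qed.

Lemma approx_lin_bnd n g b : (1 <= n)%nat -> c0 b = 0 -> approx n g b ->
  exists C d, 0 < d /\ forall x, Rabs x < d -> Rabs (g x) <= C * Rabs x.
Proof. intros Hn H0 Hg.
destruct (cont_bnd (fun x => c1 b + c2 b * x + c3 b * x^2 + c4 b * x^3 + c5 b * x^4)) as [M [d1 [Hd1 HM]]].
{ apply exd_cont; auto_derive; auto. }
destruct (Hg 1 Rlt_0_1) as [d2 [Hd2 H2]].
exists (M + 1), (Rmin 1 (Rmin d1 d2)); split. repeat apply Rmin_pos; lra.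
intros x Hx. assert (Hx1 : Rabs x < 1) by (eapply Rlt_le_trans; [apply Hx|apply Rmin_l]).
assert (Hxd1 : Rabs x < d1) by (eapply Rlt_le_trans; [apply Hx|]; eapply Rle_trans; [apply Rmin_r|apply Rmin_l]).
assert (Hxd2 : Rabs x < d2) by (eapply Rlt_le_trans; [apply Hx|]; eapply Rle_trans; [apply Rmin_r|apply Rmin_r]).
specialize (H2 x Hxd2). specialize (HM x Hxd1).
assert (E : ev b x = x * (c1 b + c2 b * x + c3 b * x^2 + c4 b * x^3 + c5 b * x^4)) by (unfold ev; rewrite H0; ring).
assert (Hp : Rabs x ^ n <= Rabs x).
{ destruct n. lia. simpl. pose proof (Rabs_pos x).
  assert (Rabs x ^ n <= 1). rewrite <- (pow1 n). apply pow_incr; lra. nra. }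
replace (g x) with ((g x - ev b x) + ev b x) by ring.
eapply Rle_trans. apply Rabs_triang.
assert (HE : Rabs (ev b x) = Rabs x * Rabs (c1 b + c2 b * x + c3 b * x^2 + c4 b * x^3 + c5 b * x^4)) by (rewrite E; apply Rabs_mult).
pose proof (Rabs_pos x) as Hax. pose proof (Rmult_le_compat_l _ _ _ Hax HM) as HH. simpl in H2. lra. Qed.

Definition jpow2 b := jmul b b.
Definition jpow3 b := jmul (jpow2 b) b.
Definition jpow4 b := jmul (jpow3 b) b.
Definition jpow5 b := jmul (jpow4 b) b.
Definition jcomp (a b : jet) : jet :=
  jadd (jconst (c0 a)) (jadd (jscal (c1 a) b) (jadd (jscal (c2 a) (jpow2 b))
   (jadd (jscal (c3 a) (jpow3 b)) (jadd (jscal (c4 a) (jpow4 b)) (jscal (c5 a) (jpow5 b)))))).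

Lemma approx_comp n f g a b : (1 <= n <= 5)%nat -> c0 b = 0 -> approx n f a -> approx n g b ->
  approx n (fun x => f (g x)) (jcomp a b).
Proof. intros Hn H0 Hf Hg.
assert (HB := approx_lin_bnd n g b ltac:(lia) H0 Hg).
assert (A1 : small n (fun x => f (g x) - ev a (g x))).
{ apply (small_comp n (fun y => f y - ev a y) g Hf HB). }
assert (G2 : approx n (fun x => g x * g x) (jpow2 b)) by (apply approx_mul; auto; lia).
assert (G3 : approx n (fun x => (g x * g x) * g x) (jpow3 b)) by (apply approx_mul; auto; lia).
assert (G4 : approx n (fun x => ((g x * g x) * g x) * g x) (jpow4 b)) by (apply approx_mul; auto; lia).
assert (G5 : approx n (fun x => (((g x * g x) * g x) * g x) * g x) (jpow5 b)) by (apply approx_mul; auto; lia).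
assert (A2 : approx n (fun x => ev a (g x)) (jcomp a b)).
{ eapply approx_ext; [|unfold jcomp; apply approx_add; [apply approx_const|];
   apply approx_add; [apply approx_scal, Hg|];
   apply approx_add; [apply approx_scal, G2|];
   apply approx_add; [apply approx_scal, G3|];
   apply approx_add; [apply approx_scal, G4| apply approx_scal, G5]].
  intros x; unfold ev at 1; simpl; ring. }
eapply small_ext; [|apply (small_plus _ _ _ A1 A2)]. intros x; simpl; ring. Qed.

Definition jinv (a : jet) : jet :=
  let i0 := / c0 a in
  let i1 := - (c1 a * i0) / c0 a in
  let i2 := - (c1 a * i1 + c2 a * i0) / c0 a in
  let i3 := - (c1 a * i2 + c2 a * i1 + c3 a * i0) / c0 a in
  let i4 := - (c1 a * i3 + c2 a * i2 + c3 a * i1 + c4 a * i0) / c0 a in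
  let i5 := - (c1 a * i4 + c2 a * i3 + c3 a * i2 + c4 a * i1 + c5 a * i0) / c0 a in
  mkjet i0 i1 i2 i3 i4 i5.

Lemma jmul_jinv a : c0 a <> 0 -> jmul a (jinv a) = jconst 1.
Proof. intros H. destruct a as [a0 a1 a2 a3 a4 a5]. simpl in H.
unfold jmul, jinv, jconst; simpl. f_equal; field; auto. Qed.

Lemma approx_inv n f a : (n <= 5)%nat -> c0 a <> 0 -> approx n f a -> approx n (fun x => / f x) (jinv a).
Proof. intros Hn H0 Hf.
assert (HP : approx n (fun x => f x * ev (jinv a) x) (jconst 1)).
{ rewrite <- (jmul_jinv a H0). apply approx_mul; auto. apply approx_ev. }
assert (Hf0 : small 0 (fun x => f x - ev a x)) by (eapply small_weaken_le; [|apply Hf]; lia).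
destruct (Hf0 (Rabs (c0 a) / 4)) as [d1 [Hd1 H1]]. assert (0 < Rabs (c0 a)) by (apply Rabs_pos_lt; auto). lra.
assert (Hc := ev_cont a 0). apply continuity_pt_filterlim in Hc.
destruct (Hc (Rabs (c0 a) / 4)) as [d2 [Hd2 H2]]. assert (0 < Rabs (c0 a)) by (apply Rabs_pos_lt; auto). lra.
assert (Hev0 : ev a 0 = c0 a) by (unfold ev; ring).
assert (LB : forall x, Rabs x < Rmin d1 d2 -> Rabs (c0 a) / 2 <= Rabs (f x)).
{ intros x Hx. specialize (H1 x (Rlt_le_trans _ _ _ Hx (Rmin_l _ _))). simpl in H1.
  assert (Rabs (ev a x - ev a 0) < Rabs (c0 a) / 4).
  { destruct (Req_dec x 0) as [->|Hx0]. rewrite Rminus_diag, Rabs_R0. assert (0 < Rabs (c0 a)) by (apply Rabs_pos_lt; auto). lra.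
    apply H2. split. split; auto. red; auto. simpl. unfold R_dist. rewrite Rminus_0_r. eapply Rlt_le_trans; [apply Hx|apply Rmin_r]. }
  rewrite Hev0 in H. pose proof (Rabs_triang_inv (c0 a) (ev a x - c0 a)).
  pose proof (Rabs_triang_inv (ev a x) (f x - ev a x)).
  replace (c0 a - (ev a x - c0 a)) with (2 * c0 a - ev a x) in H3 by ring.
  rewrite Rabs_minus_sym in H. 
  replace (ev a x - (f x - ev a x)) with (2 * ev a x - f x) in H4 by ring.
  pose proof (Rabs_triang (f x - ev a x) (ev a x - f x)). 
  replace (f x - ev a x + (ev a x - f x)) with 0 in H5 by ring.
  assert (Rabs (ev a x - c0 a) = Rabs (c0 a - ev a x)) by apply Rabs_minus_sym.
  pose proof (Rabs_triang (f x) (ev a x - f x)). replace (f x + (ev a x - f x)) with (ev a x) in H7 by ring.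
  pose proof (Rabs_triang (ev a x) (c0 a - ev a x)). replace (ev a x + (c0 a - ev a x)) with (c0 a) in H8 by ring.
  rewrite Rabs_minus_sym in H1. lra. }
unfold approx. eapply small_ext_loc with (fun x => (1 - f x * ev (jinv a) x) * (/ f x)).
{ exists (Rmin d1 d2); split. apply Rmin_pos; auto. intros x Hx.
  assert (f x <> 0). intros E. specialize (LB x Hx). rewrite E, Rabs_R0 in LB.
  assert (0 < Rabs (c0 a)) by (apply Rabs_pos_lt; auto). lra.
  cbv beta. field. auto. }
apply small_mul_bnd.
{ eapply small_ext; [|apply small_opp, HP]. intros x; unfold ev, jconst; simpl; ring. }
exists (2 / Rabs (c0 a)), (Rmin d1 d2); split. apply Rmin_pos; auto.
intros x Hx. specialize (LB x Hx). assert (0 < Rabs (c0 a)) by (apply Rabs_pos_lt; auto).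
rewrite Rabs_inv. 
replace (2 / Rabs (c0 a)) with (/ (Rabs (c0 a) / 2)) by (field; lra).
apply Rinv_le_contravar; lra. Qed.

Lemma approx_trunc n f a b : (n <= 4)%nat -> c0 a = c0 b -> c1 a = c1 b -> c2 a = c2 b -> c3 a = c3 b -> c4 a = c4 b ->
  approx n f a -> approx n f b.
Proof. intros Hn E0 E1 E2 E3 E4 Hf.
eapply small_ext with (fun x => (f x - ev a x) + x ^ 5 * (c5 a - c5 b)).
{ intros x; unfold ev; rewrite E0, E1, E2, E3, E4; ring. }
apply small_plus; auto. apply small_weaken_le with 4%nat; auto. apply small_xpow.
apply exd_cont; auto_derive; auto. Qed.


Section Taylor.
Variable V : R -> R.
Variable d : R.
Hypothesis Hd : 0 < d.
Hypothesis HD : forall k, (k <= 5)%nat -> forall x, Rabs x < d -> ex_derive_n V k x.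
Hypothesis HD6 : ex_derive_n V 6 0.

Definition cc k := Derive_n V k 0.

Lemma Dderiv k x : (k <= 4)%nat -> Rabs x < d -> is_derive (Derive_n V k) x (Derive_n V (S k) x).
Proof. intros Hk Hx. assert (H := HD (S k) ltac:(lia) x Hx). simpl in H.
apply (Derive_correct (Derive_n V k) x H). Qed.

Definition p5 x := cc 5 + cc 6 * x.
Definition p4 x := cc 4 + cc 5 * x + cc 6 * x^2 / 2.
Definition p3 x := cc 3 + cc 4 * x + cc 5 * x^2 / 2 + cc 6 * x^3 / 6.
Definition p2 x := cc 2 + cc 3 * x + cc 4 * x^2 / 2 + cc 5 * x^3 / 6 + cc 6 * x^4 / 24.
Definition p1 x := cc 1 + cc 2 * x + cc 3 * x^2 / 2 + cc 4 * x^3 / 6 + cc 5 * x^4 / 24 + cc 6 * x^5 / 120.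
Definition p0 x := cc 0 + cc 1 * x + cc 2 * x^2 / 2 + cc 3 * x^3 / 6 + cc 4 * x^4 / 24 + cc 5 * x^5 / 120 + cc 6 * x^6 / 720.

Lemma T5 : small 1 (fun x => Derive_n V 5 x - p5 x).
Proof. assert (H : is_derive (Derive_n V 5) 0 (cc 6)).
{ apply (Derive_correct (Derive_n V 5) 0 HD6). }
apply derive_small1 in H. eapply small_ext; [|apply H]. intros x; unfold p5, cc; ring. Qed.

Lemma T4 : small 2 (fun x => Derive_n V 4 x - p4 x).
Proof. apply (small_up 1 d _ (Derive_n V 5) _ p5).
- auto.
- intros; apply Dderiv; auto; lia.
- intros x; unfold p4, p5; auto_derive; [auto|field].
- unfold p4, cc. simpl pow. lra.
- exact T5. Qed.

Lemma T3 : small 3 (fun x => Derive_n V 3 x - p3 x).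
Proof. apply (small_up 2 d _ (Derive_n V 4) _ p4).
- auto.
- intros; apply Dderiv; auto; lia.
- intros x; unfold p4, p3; auto_derive; [auto|field].
- unfold p3, cc. simpl pow. lra.
- exact T4. Qed.

Lemma T2 : small 4 (fun x => Derive_n V 2 x - p2 x).
Proof. apply (small_up 3 d _ (Derive_n V 3) _ p3).
- auto.
- intros; apply Dderiv; auto; lia.
- intros x; unfold p2, p3; auto_derive; [auto|field].
- unfold p2, cc. simpl pow. lra.
- exact T3. Qed.

Lemma T1 : small 5 (fun x => Derive_n V 1 x - p1 x).
Proof. apply (small_up 4 d _ (Derive_n V 2) _ p2).
- auto.
- intros; apply Dderiv; auto; lia.
- intros x; unfold p2, p1; auto_derive; [auto|field].
- unfold p1, cc. simpl pow. lra.
- exact T2. Qed.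

Lemma T0 : small 6 (fun x => V x - p0 x).
Proof. apply (small_up 5 d _ (Derive_n V 1) _ p1).
- auto.
- intros; apply (Dderiv 0); auto; lia.
- intros x; unfold p0, p1; auto_derive; [auto|field].
- unfold p0, cc; change (Derive_n V 0 0) with (V 0). simpl pow. lra.
- exact T1. Qed.

End Taylor.


Lemma cont_eps (g : R -> R) y : continuous g y -> forall eps, 0 < eps ->
  exists a, 0 < a /\ forall z, Rabs (z - y) < a -> Rabs (g z - g y) < eps.
Proof. intros Hc eps He. apply continuity_pt_filterlim in Hc.
destruct (Hc eps He) as [a [Ha H]]. exists a; split; auto. intros z Hz.
destruct (Req_dec z y) as [->|Hzy]. rewrite Rminus_diag, Rabs_R0; lra.
apply H. split. split. red; auto. auto. simpl. unfold R_dist; auto. Qed.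

Lemma inv_derive (f g : R -> R) y l e : 0 < e -> (forall z, Rabs (z - y) < e -> f (g z) = z) ->
  continuous g y -> is_derive f (g y) l -> l <> 0 -> is_derive g y (/ l).
Proof. intros He Hfg Hc Hf Hl. apply is_derive_Reals. apply is_derive_Reals in Hf.
intros eps Heps.
assert (Hal : 0 < Rabs l) by (apply Rabs_pos_lt; auto).
set (e0 := Rmin (Rabs l / 2) (eps * Rabs l ^ 2 / 2)).
assert (He0 : 0 < e0) by (apply Rmin_pos; [lra| apply Rmult_lt_0_compat; [apply Rmult_lt_0_compat; [auto| apply pow_lt; auto]|lra]]).
destruct (Hf e0 He0) as [eta Heta].
destruct (cont_eps g y Hc eta (cond_pos eta)) as [a [Ha Hga]].
assert (Hd : 0 < Rmin e a) by (apply Rmin_pos; auto).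
exists (mkposreal _ Hd). intros h Hh0 Hh. simpl in Hh.
assert (Hhe : Rabs h < e) by (eapply Rlt_le_trans; [apply Hh| apply Rmin_l]).
assert (Hha : Rabs h < a) by (eapply Rlt_le_trans; [apply Hh| apply Rmin_r]).
set (k := g (y + h) - g y).
assert (E1 : f (g (y + h)) = y + h) by (apply Hfg; replace (y + h - y) with h by ring; auto).
assert (E2 : f (g y) = y) by (apply Hfg; rewrite Rminus_diag, Rabs_R0; auto).
assert (Hk0 : k <> 0). { intros Hk. unfold k in Hk. assert (g (y + h) = g y) by lra.
  rewrite H in E1. lra. }
assert (Hk : Rabs k < eta). { unfold k. apply Hga. replace (y + h - y) with h by ring; auto. }
specialize (Heta k Hk0 Hk).
replace (g y + k) with (g (y + h)) in Heta by (unfold k; ring).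
rewrite E1, E2 in Heta. replace (y + h - y) with h in Heta by ring.
set (q := h / k) in *.
assert (Hq1 : Rabs (q - l) < Rabs l / 2) by (eapply Rlt_le_trans; [apply Heta| apply Rmin_l]).
assert (Hq2 : Rabs (q - l) < eps * Rabs l ^ 2 / 2) by (eapply Rlt_le_trans; [apply Heta| apply Rmin_r]).
assert (Hqa : Rabs l / 2 < Rabs q). { pose proof (Rabs_triang_inv l (l - q)). replace (l - (l - q)) with q in H by ring.
  rewrite Rabs_minus_sym in Hq1. lra. }
assert (Hq0 : q <> 0). { intros E. rewrite E, Rabs_R0 in Hqa. lra. }
replace (k / h - / l) with ((l - q) / (q * l)).
2:{ unfold q, k. field. repeat split; auto. }
unfold Rdiv. rewrite Rabs_mult, Rabs_inv, Rabs_mult. rewrite Rabs_minus_sym.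
assert (0 < Rabs q) by lra.
apply Rmult_lt_reg_r with (Rabs q * Rabs l). apply Rmult_lt_0_compat; auto.
rewrite Rmult_assoc, Rinv_l. 2:{ apply Rgt_not_eq; apply Rmult_lt_0_compat; auto. }
rewrite Rmult_1_r. simpl in Hq2. rewrite Rmult_1_r in Hq2.
assert (eps * (Rabs l * Rabs l) / 2 <= eps * (Rabs q * Rabs l)).
{ unfold Rdiv. rewrite Rmult_assoc. apply Rmult_le_compat_l. lra. nra. }
lra. Qed.


Lemma jpow2_eq b : c0 b = 0 -> jpow2 b = mkjet 0 0 (c1 b ^ 2) (2 * c1 b * c2 b)
   (2 * c1 b * c3 b + c2 b ^ 2) (2 * c1 b * c4 b + 2 * c2 b * c3 b).
Proof. destruct b as [b0 b1 b2 b3 b4 b5]; simpl; intros ->. unfold jpow2, jmul; simpl. f_equal; ring. Qed.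

Lemma jpow3_eq b : c0 b = 0 -> jpow3 b = mkjet 0 0 0 (c1 b ^ 3) (3 * c1 b ^ 2 * c2 b)
   (3 * c1 b ^ 2 * c3 b + 3 * c1 b * c2 b ^ 2).
Proof. intros H. unfold jpow3. rewrite (jpow2_eq b H). destruct b as [b0 b1 b2 b3 b4 b5]; simpl in *; subst.
unfold jmul; simpl. f_equal; ring. Qed.

Lemma jpow4_eq b : c0 b = 0 -> jpow4 b = mkjet 0 0 0 0 (c1 b ^ 4) (4 * c1 b ^ 3 * c2 b).
Proof. intros H. unfold jpow4. rewrite (jpow3_eq b H). destruct b as [b0 b1 b2 b3 b4 b5]; simpl in *; subst.
unfold jmul; simpl. f_equal; ring. Qed.

Lemma jpow5_eq b : c0 b = 0 -> jpow5 b = mkjet 0 0 0 0 0 (c1 b ^ 5).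
Proof. intros H. unfold jpow5. rewrite (jpow4_eq b H). destruct b as [b0 b1 b2 b3 b4 b5]; simpl in *; subst.
unfold jmul; simpl. f_equal; ring. Qed.

Lemma jcomp_eq a b : c0 b = 0 -> jcomp a b = mkjet (c0 a) (c1 a * c1 b)
  (c1 a * c2 b + c2 a * c1 b ^ 2)
  (c1 a * c3 b + 2 * c2 a * c1 b * c2 b + c3 a * c1 b ^ 3)
  (c1 a * c4 b + c2 a * (2 * c1 b * c3 b + c2 b ^ 2) + 3 * c3 a * c1 b ^ 2 * c2 b + c4 a * c1 b ^ 4)
  (c1 a * c5 b + c2 a * (2 * c1 b * c4 b + 2 * c2 b * c3 b) + c3 a * (3 * c1 b ^ 2 * c3 b + 3 * c1 b * c2 b ^ 2)
     + 4 * c4 a * c1 b ^ 3 * c2 b + c5 a * c1 b ^ 5).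
Proof. intros H. unfold jcomp. rewrite (jpow2_eq b H), (jpow3_eq b H), (jpow4_eq b H), (jpow5_eq b H).
destruct b as [b0 b1 b2 b3 b4 b5]; simpl in *; subst. unfold jadd, jscal, jconst; simpl. f_equal; ring. Qed.

Definition gg1 (s1 : R) := / s1.
Definition gg2 (s1 s2 : R) := - s2 / s1^3.
Definition gg3 (s1 s2 s3 : R) := (2 * s2^2 - s1 * s3) / s1^5.
Definition gg4 (s1 s2 s3 s4 : R) := (- 5 * s2^3 + 5 * s1 * s2 * s3 - s1^2 * s4) / s1^7.
Definition gg5 (s1 s2 s3 s4 s5 : R) := (14 * s2^4 - 21 * s1 * s2^2 * s3 + 3 * s1^2 * s3^2 + 6 * s1^2 * s2 * s4 - s1^3 * s5) / s1^9.

Lemma SG_gen s1 s2 s3 s4 s5 : s1 <> 0 ->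
  jcomp (mkjet 0 s1 s2 s3 s4 s5) (mkjet 0 (gg1 s1) (gg2 s1 s2) (gg3 s1 s2 s3) (gg4 s1 s2 s3 s4) (gg5 s1 s2 s3 s4 s5))
  = mkjet 0 1 0 0 0 0.
Proof. intros H. rewrite jcomp_eq by reflexivity. simpl. unfold gg1, gg2, gg3, gg4, gg5. f_equal; field; auto. Qed.

Lemma Gd_gen s1 s2 s3 s4 s5 : s1 <> 0 ->
  let k := jinv (jcomp (mkjet s1 (2*s2) (3*s3) (4*s4) (5*s5) 0)
     (mkjet 0 (gg1 s1) (gg2 s1 s2) (gg3 s1 s2 s3) (gg4 s1 s2 s3 s4) (gg5 s1 s2 s3 s4 s5))) in
  c0 k = gg1 s1 /\ c1 k = 2 * gg2 s1 s2 /\ c2 k = 3 * gg3 s1 s2 s3 /\ c3 k = 4 * gg4 s1 s2 s3 s4 /\ c4 k = 5 * gg5 s1 s2 s3 s4 s5.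
Proof. intros H. rewrite jcomp_eq by reflexivity. cbv zeta. unfold jinv. cbn [c0 c1 c2 c3 c4 c5].
unfold gg1, gg2, gg3, gg4, gg5. repeat split; field; auto. Qed.


Lemma near_cont (f : R -> R) e : continuous f 0 -> 0 < e ->
  exists d, 0 < d /\ forall x, Rabs x < d -> Rabs (f x - f 0) <= e.
Proof. intros Hc He. apply continuity_pt_filterlim in Hc.
destruct (Hc e He) as [d [Hd H]]. exists d; split; auto. intros x Hx.
destruct (Req_dec x 0) as [->|Hx0]. rewrite Rminus_diag, Rabs_R0; lra.
apply Rlt_le, H. split. split; auto. red; auto. simpl. unfold R_dist. rewrite Rminus_0_r; auto. Qed.

Lemma loc_gt x : 0 < x -> locally x (fun y => 0 < y).
Proof. intros H. exists (mkposreal x H). intros y Hy. change (Rabs (y - x) < x) in Hy.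
apply Rabs_lt_between' in Hy. lra. Qed.
Lemma loc_lt x : x < 0 -> locally x (fun y => y < 0).
Proof. intros H. assert (H' : 0 < - x) by lra. exists (mkposreal (-x) H'). intros y Hy. change (Rabs (y - x) < -x) in Hy.
apply Rabs_lt_between' in Hy. lra. Qed.
Lemma loc_abs x e : Rabs x < e -> locally x (fun y => Rabs y < e).
Proof. intros H. assert (H' : 0 < e - Rabs x) by lra. exists (mkposreal _ H'). intros y Hy. change R in y. change (Rabs (y - x) < e - Rabs x) in Hy.
pose proof (Rabs_triang (y - x) x). replace (y - x + x) with y in H0 by ring. lra. Qed.

Lemma cont_small0 g : continuous g 0 -> small 0 (fun x => g x - g 0).
Proof. intros Hc eps He. destruct (near_cont g eps Hc He) as [d [Hd H]]. exists d; split; auto.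
intros x Hx. simpl. rewrite Rmult_1_r. auto. Qed.

Lemma approx0_cont f a : approx 0 f a -> f 0 = ev a 0 -> continuous f 0.
Proof. intros H H0. apply small0_cont. eapply small_ext; [|apply (small_plus _ _ _ H (cont_small0 _ (ev_cont a 0)))].
intros x; simpl. rewrite H0; ring. Qed.

Section SF.
Variable V : R -> R.
Variable d : R.
Hypothesis Hd : 0 < d.
Hypothesis HD : forall k, (k <= 5)%nat -> forall x, Rabs x < d -> ex_derive_n V k x.
Hypothesis HD6 : ex_derive_n V 6 0.
Hypothesis HV0 : V 0 = 0.
Hypothesis HV1 : Derive V 0 = 0.
Hypothesis HV2 : 0 < Derive_n V 2 0.

Definition s1 := sqrt (cc V 2 / 2).
Definition s2 := cc V 3 / (12 * s1).
Definition s3 := (cc V 4 / 24 - s2^2) / (2 * s1).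
Definition s4 := (cc V 5 / 120 - 2 * s2 * s3) / (2 * s1).
Definition s5 := (cc V 6 / 720 - 2 * s2 * s4 - s3^2) / (2 * s1).

Lemma s1_pos : 0 < s1.
Proof. unfold s1. apply sqrt_lt_R0. unfold cc. lra. Qed.
Lemma cc0 : cc V 0 = 0. Proof. exact HV0. Qed.
Lemma cc1 : cc V 1 = 0. Proof. exact HV1. Qed.
Lemma R2 : cc V 2 = 2 * s1^2.
Proof. unfold s1. simpl. rewrite Rmult_1_r, sqrt_sqrt. field. unfold cc; lra. Qed.
Lemma R3 : cc V 3 = 12 * s1 * s2.
Proof. unfold s2. field. pose proof s1_pos; lra. Qed.
Lemma R4 : cc V 4 = 24 * (2 * s1 * s3 + s2^2).
Proof. unfold s3. field. pose proof s1_pos; lra. Qed.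
Lemma R5 : cc V 5 = 120 * (2 * s1 * s4 + 2 * s2 * s3).
Proof. unfold s4. field. pose proof s1_pos; lra. Qed.
Lemma R6 : cc V 6 = 720 * (2 * s1 * s5 + 2 * s2 * s4 + s3^2).
Proof. unfold s5. field. pose proof s1_pos; lra. Qed.

Definition Sj := mkjet 0 s1 s2 s3 s4 s5.
Definition S'j := mkjet s1 (2*s2) (3*s3) (4*s4) (5*s5) 0.

Lemma p0_eq x : p0 V x = ev Sj x ^ 2 - x^7 * (2*s2*s5+2*s3*s4 + (2*s3*s5+s4^2)*x + 2*s4*s5*x^2 + s5^2*x^3).
Proof. unfold p0, ev, Sj; cbn [c0 c1 c2 c3 c4 c5]. rewrite cc0, cc1, R2, R3, R4, R5, R6. field. Qed.

Lemma p1_eq x : p1 V x = 2 * ev Sj x * ev S'j x - x^6 * (14*s2*s5+14*s3*s4 + 8*(2*s3*s5+s4^2)*x + 18*s4*s5*x^2 + 10*s5^2*x^3).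
Proof. unfold p1, ev, Sj, S'j; cbn [c0 c1 c2 c3 c4 c5]. rewrite cc1, R2, R3, R4, R5, R6. field. Qed.

Lemma VS : small 6 (fun x => V x - ev Sj x ^ 2).
Proof. eapply small_ext with (fun x => (V x - p0 V x) + - (x ^ 7 * (2*s2*s5+2*s3*s4 + (2*s3*s5+s4^2)*x + 2*s4*s5*x^2 + s5^2*x^3))).
intros x. rewrite p0_eq. ring.
apply small_plus. apply (T0 V d Hd HD HD6). apply small_opp. apply small_xpow.
apply exd_cont; auto_derive; auto. Qed.

Lemma DVS : small 5 (fun x => Derive_n V 1 x - 2 * ev Sj x * ev S'j x).
Proof. eapply small_ext with (fun x => (Derive_n V 1 x - p1 V x) + - (x ^ 6 * (14*s2*s5+14*s3*s4 + 8*(2*s3*s5+s4^2)*x + 18*s4*s5*x^2 + 10*s5^2*x^3))).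
intros x. rewrite p1_eq. ring.
apply small_plus. apply (T1 V d Hd HD HD6). apply small_opp. apply small_xpow.
apply exd_cont; auto_derive; auto. Qed.

Definition qS x := s1 + s2 * x + s3 * x^2 + s4 * x^3 + s5 * x^4.
Lemma evS_q x : ev Sj x = x * qS x.
Proof. unfold ev, qS, Sj; simpl; ring. Qed.

Lemma near1 : exists d1, 0 < d1 /\ d1 <= d /\ forall x, Rabs x < d1 ->
   s1 / 2 <= qS x /\ s1^2 / 9 * x^2 <= V x /\ Rabs (ev S'j x - s1) <= s1 / 4.
Proof.
pose proof s1_pos as Hs1.
destruct (near_cont qS (s1/2)) as [e1 [He1 H1]]. apply exd_cont; unfold qS; auto_derive; auto. lra.
destruct (near_cont (ev S'j) (s1/4)) as [e2 [He2 H2]]. apply ev_cont. lra.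
destruct (VS 1 Rlt_0_1) as [e3 [He3 H3]].
exists (Rmin (Rmin d 1) (Rmin (s1/3) (Rmin e1 (Rmin e2 e3)))).
split. repeat apply Rmin_pos; lra. split. eapply Rle_trans; apply Rmin_l.
intros x Hx.
assert (X1 : Rabs x < 1). { eapply Rlt_le_trans; [apply Hx|]. eapply Rle_trans; [apply Rmin_l| apply Rmin_r]. }
assert (X2 : Rabs x < s1/3). { eapply Rlt_le_trans; [apply Hx|]. eapply Rle_trans; [apply Rmin_r| apply Rmin_l]. }
assert (X3 : Rabs x < e1). { eapply Rlt_le_trans; [apply Hx|]. eapply Rle_trans; [apply Rmin_r|]. eapply Rle_trans; [apply Rmin_r| apply Rmin_l]. }
assert (X4 : Rabs x < e2). { eapply Rlt_le_trans; [apply Hx|]. eapply Rle_trans; [apply Rmin_r|]. eapply Rle_trans; [apply Rmin_r|]. eapply Rle_trans; [apply Rmin_r| apply Rmin_l]. }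
assert (X5 : Rabs x < e3). { eapply Rlt_le_trans; [apply Hx|]. eapply Rle_trans; [apply Rmin_r|]. eapply Rle_trans; [apply Rmin_r|]. eapply Rle_trans; [apply Rmin_r| apply Rmin_r]. }
specialize (H1 x X3). specialize (H2 x X4). specialize (H3 x X5).
assert (Hq0 : qS 0 = s1) by (unfold qS; ring). rewrite Hq0 in H1.
assert (He0 : ev S'j 0 = s1) by (unfold ev, S'j; simpl; ring). rewrite He0 in H2.
assert (Hq : s1 / 2 <= qS x). { pose proof (Rle_abs (s1 - qS x)) as HH. rewrite Rabs_minus_sym in HH. lra. }
repeat split; auto.
rewrite evS_q, Rmult_1_l, RPow_abs, (Rabs_right (x^6)) in H3 by (apply Rle_ge; replace (x^6) with ((x^3)^2) by ring; apply pow2_ge_0).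
assert (Hx2 : x^2 = Rabs x ^ 2) by (rewrite pow2_abs; auto).
assert (HA : Rabs x <= 1) by lra. assert (HB : Rabs x < s1 / 3) by lra.
assert (x ^ 2 <= s1^2/9). { rewrite Hx2. pose proof (Rabs_pos x). simpl; nra. }
assert (x^6 <= x^2 * (s1^2/9)). { assert (x^6 = x^2 * x^4) by ring. assert (x^4 <= x^2). { assert (x^2 <= 1) by (rewrite Hx2; pose proof (Rabs_pos x); simpl; nra). assert (x^4 = x^2*x^2) by ring. nra. } assert (0 <= x^2) by apply pow2_ge_0. nra. }
assert (x^2 * (s1^2/4) <= (x * qS x)^2). { replace ((x * qS x)^2) with (x^2 * (qS x)^2) by ring. apply Rmult_le_compat_l. apply pow2_ge_0. nra. }
pose proof (Rle_abs (V x - (x * qS x)^2)). rewrite Rabs_minus_sym in H3 || idtac.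
assert (Rabs ((x * qS x)^2 - V x) = Rabs (V x - (x * qS x)^2)) by apply Rabs_minus_sym.
pose proof (Rle_abs ((x * qS x)^2 - V x)). nra. Qed.

Variable d1 : R.
Hypothesis Hd1 : 0 < d1.
Hypothesis Hd1d : d1 <= d.
Hypothesis Hn1 : forall x, Rabs x < d1 ->
   s1 / 2 <= qS x /\ s1^2 / 9 * x^2 <= V x /\ Rabs (ev S'j x - s1) <= s1 / 4.

Definition s x := if Rle_dec 0 x then sqrt (V x) else - sqrt (V x).

Lemma V_nonneg x : Rabs x < d1 -> 0 <= V x.
Proof. intros Hx. destruct (Hn1 x Hx) as [_ [H _]]. pose proof s1_pos. assert (0 <= s1^2/9 * x^2).
apply Rmult_le_pos. apply Rmult_le_pos. apply pow2_ge_0. lra. apply pow2_ge_0. lra. Qed.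

Lemma s_sq x : Rabs x < d1 -> s x * s x = V x.
Proof. intros Hx. unfold s. destruct (Rle_dec 0 x). apply sqrt_sqrt, V_nonneg; auto.
replace (- sqrt (V x) * - sqrt (V x)) with (sqrt (V x) * sqrt (V x)) by ring. apply sqrt_sqrt, V_nonneg; auto. Qed.

Lemma s0 : s 0 = 0.
Proof. unfold s. destruct (Rle_dec 0 0). rewrite HV0; apply sqrt_0. lra. Qed.

Lemma s_pos x : 0 <= x -> 0 <= s x.
Proof. intros H. unfold s. destruct (Rle_dec 0 x). apply sqrt_pos. lra. Qed.
Lemma s_neg x : x <= 0 -> s x <= 0.
Proof. intros H. unfold s. destruct (Rle_dec 0 x). assert (x = 0) by lra. subst. rewrite HV0, sqrt_0; lra.
pose proof (sqrt_pos (V x)); lra. Qed.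

Lemma s_lb x : Rabs x < d1 -> s1 / 3 * Rabs x <= Rabs (s x).
Proof. intros Hx. destruct (Hn1 x Hx) as [_ [H _]]. pose proof s1_pos.
assert (E : Rabs (s x) * Rabs (s x) = V x) by (rewrite <- Rabs_mult, s_sq; auto; apply Rabs_right, Rle_ge, V_nonneg; auto).
assert (E2 : x^2 = Rabs x * Rabs x) by (rewrite <- Rabs_mult; rewrite Rabs_right; [ring|]; apply Rle_ge; nra).
rewrite E2 in H. pose proof (Rabs_pos (s x)). pose proof (Rabs_pos x). nra. Qed.

Lemma S_lb x : Rabs x < d1 -> s1 / 2 * Rabs x <= Rabs (ev Sj x) /\ 0 <= x * ev Sj x.
Proof. intros Hx. destruct (Hn1 x Hx) as [H _]. pose proof s1_pos. rewrite evS_q. split.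
rewrite Rabs_mult. rewrite (Rabs_right (qS x)) by lra. pose proof (Rabs_pos x). nra.
replace (x * (x * qS x)) with (x^2 * qS x) by ring. apply Rmult_le_pos. apply pow2_ge_0. lra. Qed.

Lemma sS : approx 5 s Sj.
Proof. pose proof s1_pos as Hs1. apply (small_div_x 5 (fun x => V x - ev Sj x ^ 2) (fun x => s x + ev Sj x)).
- exact VS.
- rewrite s0. unfold ev, Sj; simpl; ring.
- exists (s1/2), d1. split. lra. split. auto. intros x Hx0 Hx. split.
  + destruct (S_lb x Hx) as [H1 H2]. destruct (Rle_dec 0 x).
    * pose proof (s_pos x r). assert (0 <= ev Sj x). { destruct (Req_dec x 0). subst; congruence. assert (0 < x) by lra. nra. }
      rewrite (Rabs_right (ev Sj x)) in H1 by lra. rewrite (Rabs_right (s x + ev Sj x)) by lra. lra.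
    * pose proof (s_neg x ltac:(lra)). assert (ev Sj x <= 0) by nra.
      rewrite (Rabs_left1 (ev Sj x)) in H1 by lra. rewrite (Rabs_left1 (s x + ev Sj x)) by lra. lra.
  + simpl. rewrite <- (s_sq x Hx). ring. Qed.

Lemma s_der0 : is_derive s 0 s1.
Proof. apply small1_derive. apply s0.
eapply small_ext with (fun x => (s x - ev Sj x) + x ^ 2 * (s2 + s3 * x + s4 * x^2 + s5 * x^3)).
intros x; unfold ev, Sj; simpl; ring.
apply small_plus. eapply small_weaken_le; [|apply sS]; lia.
apply small_xpow. apply exd_cont; auto_derive; auto. Qed.

Lemma s_der x : Rabs x < d1 -> x <> 0 -> is_derive s x (Derive_n V 1 x / (2 * s x)).
Proof. intros Hx Hx0.
assert (HV : ex_derive V x) by (apply (HD 1 ltac:(lia) x); lra).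
assert (HVp : 0 < V x). { destruct (Hn1 x Hx) as [_ [H _]]. pose proof s1_pos. assert (0 < x^2) by (apply pow2_gt_0; auto). assert (0 < s1^2/9 * x^2) by (apply Rmult_lt_0_compat; [nra|auto]). lra. }
destruct (Rle_dec 0 x) as [Hp|Hn].
- assert (Hp' : 0 < x) by lra.
  apply is_derive_ext_loc with (fun y => sqrt (V y)).
  { eapply filter_imp; [|apply loc_gt, Hp']. intros y Hy. unfold s. destruct (Rle_dec 0 y); auto; lra. }
  unfold s. destruct (Rle_dec 0 x); [|lra].
  apply is_derive_sqrt; auto. apply (Derive_correct V x HV).
- apply is_derive_ext_loc with (fun y => - sqrt (V y)).
  { eapply filter_imp; [|apply loc_lt; lra]. intros y Hy. unfold s. destruct (Rle_dec 0 y); auto; lra. }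
  unfold s. destruct (Rle_dec 0 x); [lra|].
  change (Derive_n V 1 x) with (Derive V x).
  replace (Derive V x / (2 * - sqrt (V x))) with (- (Derive V x / (2 * sqrt (V x)))).
  apply (is_derive_opp (fun y => sqrt (V y))). apply is_derive_sqrt; auto. apply (Derive_correct V x HV).
  field. apply Rgt_not_eq, sqrt_lt_R0; auto. Qed.

Definition sd x := if Req_EM_T x 0 then s1 else Derive_n V 1 x / (2 * s x).

Lemma s_der_all x : Rabs x < d1 -> is_derive s x (sd x).
Proof. intros Hx. unfold sd. destruct (Req_EM_T x 0). subst; apply s_der0. apply s_der; auto. Qed.

Lemma s_ne0 x : Rabs x < d1 -> x <> 0 -> s x <> 0.
Proof. intros Hx Hx0 E. pose proof (s_lb x Hx). rewrite E, Rabs_R0 in H. pose proof s1_pos.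
pose proof (Rabs_pos_lt x Hx0). nra. Qed.

Lemma sdS : approx 4 sd S'j.
Proof. pose proof s1_pos as Hs1. apply (small_div_x 4 (fun x => Derive_n V 1 x - 2 * s x * ev S'j x) (fun x => 2 * s x)).
- eapply small_ext with (fun x => (Derive_n V 1 x - 2 * ev Sj x * ev S'j x) + (ev Sj x - s x) * (2 * ev S'j x)).
  intros; ring. apply small_plus. apply DVS. apply small_mul_bnd.
  eapply small_ext; [|apply small_opp, sS]. intros; simpl; ring.
  apply cont_bnd. apply exd_cont. unfold ev; auto_derive; auto.
- unfold sd. destruct (Req_EM_T 0 0); [|congruence]. unfold ev, S'j; simpl; ring.
- exists (2 * (s1/3)), d1. split. lra. split. auto. intros x Hx0 Hx. split.
  rewrite Rabs_mult, (Rabs_right 2) by lra. pose proof (s_lb x Hx). lra.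
  unfold sd. destruct (Req_EM_T x 0); [congruence|]. field. apply s_ne0; auto. Qed.

Lemma sd_cont x : Rabs x < d1 -> continuous sd x.
Proof. intros Hx. destruct (Req_dec x 0) as [->|Hx0].
- apply approx0_cont with S'j. eapply small_weaken_le; [|apply sdS]; lia.
  unfold sd. destruct (Req_EM_T 0 0); [|congruence]. unfold ev, S'j; simpl; ring.
- apply continuous_ext_loc with (fun y => Derive_n V 1 y / (2 * s y)).
  { assert (HL : locally x (fun y => y <> 0)).
    { destruct (Rlt_dec 0 x). eapply filter_imp; [|apply loc_gt; auto]. intros; lra.
      eapply filter_imp; [|apply loc_lt; lra]. intros; lra. }
    eapply filter_imp; [|apply HL]. intros y Hy. unfold sd. destruct (Req_EM_T y 0); [congruence|auto]. }
  apply exd_cont. auto_derive. split. apply (HD 2 ltac:(lia) x). lra.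
  split. eexists. apply s_der; auto. split; auto. pose proof (s_ne0 x Hx Hx0). lra. Qed.

Lemma V_der x : Rabs x < d1 -> Derive V x = 2 * s x * sd x.
Proof. intros Hx. apply is_derive_unique.
apply is_derive_ext_loc with (fun y => s y * s y).
{ eapply filter_imp; [|apply (loc_abs x d1 Hx)]. intros y Hy. apply s_sq; auto. }
assert (H := is_derive_mult s s x (sd x) (sd x) (s_der_all x Hx) (s_der_all x Hx) Rmult_comm).
replace (2 * s x * sd x) with (plus (mult (sd x) (s x)) (mult (s x) (sd x))). exact H.
unfold plus, mult; simpl. ring. Qed.

Lemma near2 : exists d2, 0 < d2 /\ d2 <= d1 /\ forall x, Rabs x < d2 -> s1 / 2 <= sd x <= 2 * s1.
Proof. pose proof s1_pos as Hs1.
assert (H0 : small 0 (fun x => sd x - ev S'j x)) by (eapply small_weaken_le; [|apply sdS]; lia).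
destruct (H0 (s1/4)) as [e [He H]]. lra.
exists (Rmin e d1). split. apply Rmin_pos; auto. split. apply Rmin_r.
intros x Hx. specialize (H x (Rlt_le_trans _ _ _ Hx (Rmin_l _ _))). simpl in H. rewrite Rmult_1_r in H.
destruct (Hn1 x (Rlt_le_trans _ _ _ Hx (Rmin_r _ _))) as [_ [_ H3]].
apply Rabs_le_between' in H. apply Rabs_le_between' in H3. lra. Qed.

Variable d2 : R.
Hypothesis Hd2 : 0 < d2.
Hypothesis Hd21 : d2 <= d1.
Hypothesis Hn2 : forall x, Rabs x < d2 -> s1 / 2 <= sd x <= 2 * s1.

Lemma s_cont x : Rabs x < d1 -> continuity_pt s x.
Proof. intros Hx. apply continuity_pt_filterlim. apply exd_cont. eexists. apply s_der_all; auto. Qed.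

Lemma s_inc u v : Rabs u < d2 -> Rabs v < d2 -> u <= v -> s1 / 2 * (v - u) <= s v - s u.
Proof. intros Hu Hv Huv.
assert (Hb : forall y, u <= y <= v -> Rabs y < d2).
{ intros y Hy. apply Rabs_def2 in Hu. apply Rabs_def2 in Hv. apply Rabs_def1; lra. }
destruct (MVT_gen s u v sd) as [c [Hc1 Hc2]].
- intros y Hy. rewrite Rmin_left, Rmax_right in Hy by lra. apply s_der_all. pose proof (Hb y ltac:(lra)); lra.
- intros y Hy. rewrite Rmin_left, Rmax_right in Hy by lra. apply s_cont. pose proof (Hb y ltac:(lra)); lra.
- rewrite Rmin_left, Rmax_right in Hc1 by lra. rewrite Hc2. destruct (Hn2 c (Hb c Hc1)). nra. Qed.

Definition dl := d2 / 2.
Definition sig0 := Rmin (s dl) (- s (- dl)).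

Lemma dl_pos : 0 < dl. Proof. unfold dl; lra. Qed.
Lemma dl_lt : dl < d2. Proof. unfold dl; lra. Qed.
Lemma abs_dl x : -dl <= x <= dl -> Rabs x < d2.
Proof. intros H. pose proof dl_lt. pose proof dl_pos. apply Rabs_def1; lra. Qed.

Lemma sig0_pos : 0 < sig0.
Proof. pose proof s1_pos. pose proof dl_pos. unfold sig0. apply Rmin_pos.
- pose proof (s_inc 0 dl ltac:(rewrite Rabs_R0; auto) (abs_dl dl ltac:(lra)) ltac:(lra)). rewrite s0 in H1. nra.
- pose proof (s_inc (-dl) 0 (abs_dl (-dl) ltac:(lra)) ltac:(rewrite Rabs_R0; auto) ltac:(lra)). rewrite s0 in H1. nra. Qed.

Lemma exG sg : exists x, Rabs sg < sig0 -> -dl < x < dl /\ s x = sg.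
Proof. destruct (Rlt_dec (Rabs sg) sig0) as [H|H]; [|exists 0; intros; lra].
assert (A1 : s (-dl) - sg < 0). { unfold sig0 in H. pose proof (Rmin_r (s dl) (- s (- dl))). apply Rabs_def2 in H. lra. }
assert (A2 : 0 < s dl - sg). { unfold sig0 in H. pose proof (Rmin_l (s dl) (- s (- dl))). apply Rabs_def2 in H. lra. }
pose proof dl_pos.
destruct (Ranalysis5.IVT_interv (fun y => s y - sg) (-dl) dl) as [z [Hz1 Hz2]]; auto.
{ intros a Ha. apply continuity_pt_minus. apply s_cont. pose proof (abs_dl a Ha); lra. apply continuity_pt_const. intros u v; auto. }
lra.
exists z. intros _. split; [|lra]. split.
- destruct (Req_dec z (-dl)); [subst; lra|lra].
- destruct (Req_dec z dl); [subst; lra|lra]. Qed.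

Definition G sg := proj1_sig (constructive_indefinite_description _ (exG sg)).

Lemma G_spec sg : Rabs sg < sig0 -> -dl < G sg < dl /\ s (G sg) = sg.
Proof. intros H. unfold G. destruct (constructive_indefinite_description _ (exG sg)) as [x Hx]. simpl. auto. Qed.

Lemma G_absd sg : Rabs sg < sig0 -> Rabs (G sg) < d2.
Proof. intros H. destruct (G_spec sg H) as [H1 _]. apply abs_dl. lra. Qed.

Lemma G_lip a b : Rabs a < sig0 -> Rabs b < sig0 -> Rabs (G a - G b) <= 2 / s1 * Rabs (a - b).
Proof. intros Ha Hb. pose proof s1_pos.
destruct (G_spec a Ha) as [_ Ea]. destruct (G_spec b Hb) as [_ Eb].
destruct (Rle_dec (G a) (G b)).
- pose proof (s_inc (G a) (G b) (G_absd a Ha) (G_absd b Hb) r). rewrite Ea, Eb in H0.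
  rewrite Rabs_left1 by lra. rewrite (Rabs_left1 (a - b)) by nra.
  apply Rmult_le_reg_l with (s1/2). lra. replace (s1 / 2 * (2 / s1 * - (a - b))) with (b - a) by (field; lra). lra.
- pose proof (s_inc (G b) (G a) (G_absd b Hb) (G_absd a Ha) ltac:(lra)). rewrite Ea, Eb in H0.
  rewrite Rabs_right by lra. rewrite (Rabs_right (a - b)) by nra.
  apply Rmult_le_reg_l with (s1/2). lra. replace (s1 / 2 * (2 / s1 * (a - b))) with (a - b) by (field; lra). lra. Qed.

Lemma G0 : G 0 = 0.
Proof. assert (H0 : Rabs 0 < sig0) by (rewrite Rabs_R0; apply sig0_pos).
destruct (G_spec 0 H0) as [_ E]. pose proof s1_pos.
destruct (Rle_dec (G 0) 0).
- pose proof (s_inc (G 0) 0 (G_absd 0 H0) ltac:(rewrite Rabs_R0; auto) r). rewrite E, s0 in H1. nra.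
- pose proof (s_inc 0 (G 0) ltac:(rewrite Rabs_R0; auto) (G_absd 0 H0) ltac:(lra)). rewrite E, s0 in H1. nra. Qed.

Lemma G_bnd sg : Rabs sg < sig0 -> Rabs (G sg) <= 2 / s1 * Rabs sg.
Proof. intros H. pose proof (G_lip sg 0 H ltac:(rewrite Rabs_R0; apply sig0_pos)).
rewrite G0, !Rminus_0_r in H0. auto. Qed.

Lemma G_inc a b : Rabs a < sig0 -> Rabs b < sig0 -> a < b -> G a < G b.
Proof. intros Ha Hb Hab. destruct (G_spec a Ha) as [_ Ea]. destruct (G_spec b Hb) as [_ Eb].
destruct (Rlt_dec (G a) (G b)); auto. pose proof s1_pos.
pose proof (s_inc (G b) (G a) (G_absd b Hb) (G_absd a Ha) ltac:(lra)). rewrite Ea, Eb in H0. nra. Qed.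

Lemma G_cont sg : Rabs sg < sig0 -> continuous G sg.
Proof. intros H. apply continuity_pt_filterlim. intros eps He. pose proof s1_pos.
exists (Rmin (sig0 - Rabs sg) (eps * s1 / 4)). split. apply Rmin_pos. lra. apply Rmult_lt_0_compat; [nra|lra].
intros x [_ Hx]. change R in x. simpl in Hx. unfold R_dist in Hx.
assert (Hx1 : Rabs (x - sg) < sig0 - Rabs sg) by (eapply Rlt_le_trans; [apply Hx|apply Rmin_l]).
assert (Hx2 : Rabs (x - sg) < eps * s1 / 4) by (eapply Rlt_le_trans; [apply Hx|apply Rmin_r]).
assert (Hxs : Rabs x < sig0). { pose proof (Rabs_triang (x - sg) sg). replace (x - sg + sg) with x in H1 by ring. lra. }
simpl. unfold R_dist. eapply Rle_lt_trans. apply (G_lip x sg Hxs H).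
apply Rmult_lt_reg_l with (s1/2). lra. replace (s1 / 2 * (2 / s1 * Rabs (x - sg))) with (Rabs (x - sg)) by (field; lra). nra. Qed.

Definition Gd sg := / sd (G sg).

Lemma Gd_bnd sg : Rabs sg < sig0 -> / (2 * s1) <= Gd sg <= 2 / s1.
Proof. intros H. unfold Gd. destruct (Hn2 _ (G_absd sg H)). pose proof s1_pos. split.
apply Rinv_le_contravar; lra. replace (2 / s1) with (/ (s1/2)) by (field; lra). apply Rinv_le_contravar; lra. Qed.

Lemma G_der sg : Rabs sg < sig0 -> is_derive G sg (Gd sg).
Proof. intros H. unfold Gd. apply (inv_derive s G sg (sd (G sg)) (sig0 - Rabs sg)). lra.
- intros z Hz. assert (Rabs z < sig0). { pose proof (Rabs_triang (z - sg) sg). replace (z - sg + sg) with z in H0 by ring. lra. }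
  apply G_spec; auto.
- apply G_cont; auto.
- apply s_der_all. pose proof (G_absd sg H); lra.
- destruct (Hn2 _ (G_absd sg H)). pose proof s1_pos. lra. Qed.

Lemma Gd_cont sg : Rabs sg < sig0 -> continuous Gd sg.
Proof. intros H. unfold Gd. apply continuous_Rinv_comp.
apply (continuous_comp G sd). apply G_cont; auto. apply sd_cont. pose proof (G_absd sg H); lra.
destruct (Hn2 _ (G_absd sg H)). pose proof s1_pos. lra. Qed.

Lemma V_der_G sg : Rabs sg < sig0 -> Derive V (G sg) = 2 * sg / Gd sg.
Proof. intros H. rewrite V_der. destruct (G_spec sg H) as [_ E]. rewrite E. unfold Gd.
destruct (Hn2 _ (G_absd sg H)). pose proof s1_pos. field. lra. pose proof (G_absd sg H); lra. Qed.

Definition g1 := gg1 s1.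
Definition g2 := gg2 s1 s2.
Definition g3 := gg3 s1 s2 s3.
Definition g4 := gg4 s1 s2 s3 s4.
Definition g5 := gg5 s1 s2 s3 s4 s5.
Definition Gj := mkjet 0 g1 g2 g3 g4 g5.
Definition Gdj := mkjet g1 (2*g2) (3*g3) (4*g4) (5*g5) 0.
Definition idj := mkjet 0 1 0 0 0 0.

Lemma SG_id : jcomp Sj Gj = idj.
Proof. pose proof s1_pos. apply SG_gen. lra. Qed.

Lemma evS_inc u v : Rabs u < d1 -> Rabs v < d1 -> u <= v -> s1 / 2 * (v - u) <= ev Sj v - ev Sj u.
Proof. intros Hu Hv Huv. pose proof s1_pos.
assert (Hb : forall y, u <= y <= v -> Rabs y < d1).
{ intros y Hy. apply Rabs_def2 in Hu. apply Rabs_def2 in Hv. apply Rabs_def1; lra. }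
destruct (MVT_gen (ev Sj) u v (ev S'j)) as [c [Hc1 Hc2]].
- intros y Hy. unfold ev, Sj, S'j; simpl. auto_derive; auto. ring.
- intros y Hy. apply continuity_pt_filterlim. apply ev_cont.
- rewrite Rmin_left, Rmax_right in Hc1 by lra. rewrite Hc2.
  destruct (Hn1 c (Hb c Hc1)) as [_ [_ H3]].
  pose proof (Rle_abs (ev S'j c - s1)) as Q1. pose proof (Rle_abs (-(ev S'j c - s1))) as Q2. rewrite Rabs_Ropp in Q2.
  assert (s1 / 2 <= ev S'j c) by lra. nra. Qed.

Lemma approx_G : approx 5 G Gj.
Proof. pose proof s1_pos as Hs1.
assert (HGb : exists C d0, 0 < d0 /\ forall x, Rabs x < d0 -> Rabs (G x) <= C * Rabs x).
{ exists (2 / s1), sig0. split. apply sig0_pos. intros; apply G_bnd; auto. }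
assert (A1 : approx 5 (fun sg => ev Sj (G sg)) idj).
{ unfold approx. apply small_ext_loc with (fun sg => - (s (G sg) - ev Sj (G sg))).
  exists sig0. split. apply sig0_pos. intros x Hx. destruct (G_spec x Hx) as [_ E]. rewrite E. unfold ev, idj; simpl; ring.
  apply small_opp. apply (small_comp 5 (fun y => s y - ev Sj y) G sS HGb). }
assert (A2 : approx 5 (fun sg => ev Sj (ev Gj sg)) idj).
{ rewrite <- SG_id. apply approx_comp; auto. lia. apply approx_ev. apply approx_ev. }
assert (A3 : small 5 (fun sg => ev Sj (G sg) - ev Sj (ev Gj sg))).
{ eapply small_ext; [|apply (small_minus _ _ _ A1 A2)]. intros; simpl; ring. }
destruct (near_cont (ev Gj) (d1/2) (ev_cont Gj 0)) as [e1 [He1 H1]]. lra.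
assert (Hg0 : ev Gj 0 = 0) by (unfold ev, Gj; simpl; ring). rewrite Hg0 in H1.
unfold approx. apply small_le with (fun sg => 2 / s1 * (ev Sj (G sg) - ev Sj (ev Gj sg))).
2:{ apply small_scal; auto. }
exists (Rmin e1 sig0). split. apply Rmin_pos; auto. apply sig0_pos.
intros x Hx. assert (Hx1 := H1 x (Rlt_le_trans _ _ _ Hx (Rmin_l _ _))). rewrite Rminus_0_r in Hx1.
assert (Hx2 : Rabs (ev Gj x) < d1) by lra.
assert (Hx3 : Rabs (G x) < d1) by (pose proof (G_absd x (Rlt_le_trans _ _ _ Hx (Rmin_r _ _))); lra).
rewrite Rabs_mult, (Rabs_right (2 / s1)). 2:{ apply Rle_ge, Rlt_le, Rdiv_lt_0_compat; lra. }
destruct (Rle_dec (G x) (ev Gj x)).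
- pose proof (evS_inc _ _ Hx3 Hx2 r). rewrite Rabs_left1 by lra. rewrite (Rabs_left1 (ev Sj (G x) - ev Sj (ev Gj x))) by nra.
  apply Rmult_le_reg_l with (s1/2). lra. replace (s1 / 2 * (2 / s1 * - (ev Sj (G x) - ev Sj (ev Gj x)))) with (ev Sj (ev Gj x) - ev Sj (G x)) by (field; lra). lra.
- pose proof (evS_inc _ _ Hx2 Hx3 ltac:(lra)). rewrite Rabs_right by lra. rewrite (Rabs_right (ev Sj (G x) - ev Sj (ev Gj x))) by nra.
  apply Rmult_le_reg_l with (s1/2). lra. replace (s1 / 2 * (2 / s1 * (ev Sj (G x) - ev Sj (ev Gj x)))) with (ev Sj (G x) - ev Sj (ev Gj x)) by (field; lra). lra. Qed.

Lemma approx_Gd : approx 4 Gd Gdj.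
Proof. pose proof s1_pos as Hs1.
assert (A1 : approx 4 (fun sg => sd (G sg)) (jcomp S'j Gj)).
{ apply approx_comp. lia. auto. apply sdS. eapply approx_weaken; [|apply approx_G]. lia. }
assert (A2 : approx 4 Gd (jinv (jcomp S'j Gj))).
{ apply approx_inv. lia. unfold jcomp, S'j, jadd, jconst, jscal; simpl. unfold jpow5, jpow4, jpow3, jpow2, jmul, Gj; simpl. 
  replace (s1 + (s1 * 0 + (2 * s2 * (0 * 0) + (3 * s3 * (0 * 0 * 0) + (4 * s4 * (0 * 0 * 0 * 0) + 5 * s5 * (0 * 0 * 0 * 0 * 0)))))) with s1 by ring. lra.
  exact A1. }
assert (Hj : forall k, k = jinv (jcomp S'j Gj) -> c0 k = c0 Gdj /\ c1 k = c1 Gdj /\ c2 k = c2 Gdj /\ c3 k = c3 Gdj /\ c4 k = c4 Gdj).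
{ intros k ->. apply (Gd_gen s1 s2 s3 s4 s5). lra. }
destruct (Hj _ eq_refl) as [E0 [E1 [E2 [E3 E4]]]].
apply (approx_trunc 4 Gd _ _ ltac:(lia) E0 E1 E2 E3 E4 A2). Qed.

End SF.


Lemma is_derive_eq (f : R -> R) x l l' : is_derive f x l -> l = l' -> is_derive f x l'.
Proof. intros H ->; auto. Qed.

Lemma final_poly a b c : (forall eps, 0 < eps -> exists rho, 0 < rho /\ forall r, 0 < r < rho ->
   Rabs (a - b * r^2 - c * r^4) <= eps * r^4) -> a = 0 /\ b = 0 /\ c = 0.
Proof. intros H.
assert (Ha : a = 0).
{ apply le_all_zero. intros eta Heta. destruct (H 1 Rlt_0_1) as [rho [Hrho Hr]].
  set (K := Rabs b + Rabs c + 1). assert (HK : 0 < K) by (unfold K; pose proof (Rabs_pos b); pose proof (Rabs_pos c); lra).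
  set (r := Rmin (rho/2) (Rmin (1/2) (eta/K))).
  assert (Hr0 : 0 < r) by (unfold r; repeat apply Rmin_pos; try lra; apply Rdiv_lt_0_compat; lra).
  assert (Hr1 : r <= 1/2) by (unfold r; eapply Rle_trans; [apply Rmin_r|apply Rmin_l]).
  assert (Hr2 : r <= eta / K) by (unfold r; eapply Rle_trans; [apply Rmin_r|apply Rmin_r]).
  assert (Hr3 : r < rho) by (unfold r; pose proof (Rmin_l (rho/2) (Rmin (1/2) (eta/K))); lra).
  specialize (Hr r (conj Hr0 Hr3)).
  assert (E : a = (a - b * r^2 - c * r^4) + b * r^2 + c * r^4) by ring.
  rewrite E. eapply Rle_trans. apply Rabs_triang. eapply Rle_trans. apply Rplus_le_compat_r. apply Rabs_triang.
  rewrite !Rabs_mult, (Rabs_right (r^2)), (Rabs_right (r^4)) by (apply Rle_ge, pow_le; lra).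
  assert (r^2 <= r) by (replace (r^2) with (r*r) by ring; nra).
  assert (0 <= r^2) by apply pow2_ge_0.
  assert (r^4 <= r^2) by (replace (r^4) with (r^2*r^2) by ring; nra).
  assert (0 <= r^4) by (apply pow_le; lra).
  assert (Rabs b * r^2 + Rabs c * r^4 + 1 * r^4 <= K * r). { unfold K. pose proof (Rabs_pos b); pose proof (Rabs_pos c). nra. }
  assert (K * r <= eta). { apply Rmult_le_reg_r with (/K). apply Rinv_0_lt_compat; auto. rewrite (Rmult_comm K), Rmult_assoc, Rinv_r by lra. rewrite Rmult_1_r. exact Hr2. }
  lra. }
subst a.
assert (Hb : b = 0).
{ apply le_all_zero. intros eta Heta. destruct (H 1 Rlt_0_1) as [rho [Hrho Hr]].
  set (K := Rabs c + 1). assert (HK : 0 < K) by (unfold K; pose proof (Rabs_pos c); lra).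
  set (r := Rmin (rho/2) (Rmin (1/2) (eta/K))).
  assert (Hr0 : 0 < r) by (unfold r; repeat apply Rmin_pos; try lra; apply Rdiv_lt_0_compat; lra).
  assert (Hr1 : r <= 1/2) by (unfold r; eapply Rle_trans; [apply Rmin_r|apply Rmin_l]).
  assert (Hr2 : r <= eta / K) by (unfold r; eapply Rle_trans; [apply Rmin_r|apply Rmin_r]).
  assert (Hr3 : r < rho) by (unfold r; pose proof (Rmin_l (rho/2) (Rmin (1/2) (eta/K))); lra).
  specialize (Hr r (conj Hr0 Hr3)).
  replace (0 - b * r^2 - c * r^4) with (- (r^2 * (b + c * r^2))) in Hr by ring.
  rewrite Rabs_Ropp, Rabs_mult, (Rabs_right (r^2)) in Hr by (apply Rle_ge, pow2_ge_0).
  assert (Hr2p : 0 < r^2) by (apply pow_lt; lra).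
  assert (Hb1 : Rabs (b + c * r^2) <= r^2).
  { apply Rmult_le_reg_l with (r^2); auto. replace (r^2 * r^2) with (1 * r^4) by ring. auto. }
  assert (E : b = (b + c * r^2) - c * r^2) by ring. rewrite E.
  eapply Rle_trans. apply Rabs_triang. rewrite Rabs_Ropp, Rabs_mult, (Rabs_right (r^2)) by (apply Rle_ge, pow2_ge_0).
  assert (r^2 <= r) by (replace (r^2) with (r*r) by ring; nra).
  assert (K * r <= eta). { apply Rmult_le_reg_r with (/K). apply Rinv_0_lt_compat; auto. rewrite (Rmult_comm K), Rmult_assoc, Rinv_r by lra. rewrite Rmult_1_r. exact Hr2. }
  unfold K in *. pose proof (Rabs_pos c). nra. }
subst b. split; auto. split; auto.
apply le_all_zero. intros eta Heta. destruct (H eta Heta) as [rho [Hrho Hr]].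
specialize (Hr (rho/2) ltac:(lra)).
replace (0 - 0 * (rho/2)^2 - c * (rho/2)^4) with (- (c * (rho/2)^4)) in Hr by ring.
rewrite Rabs_Ropp, Rabs_mult, (Rabs_right ((rho/2)^4)) in Hr by (apply Rle_ge, pow_le; lra).
assert (0 < (rho/2)^4) by (apply pow_lt; lra). nra. Qed.

Section Sol.
Variables (G Gd : R -> R) (sig0 s1 : R).
Hypothesis Hsig0 : 0 < sig0.
Hypothesis Hs1 : 0 < s1.
Hypothesis HGder : forall sg, Rabs sg < sig0 -> is_derive G sg (Gd sg).
Hypothesis HGdc : forall sg, Rabs sg < sig0 -> continuous Gd sg.
Hypothesis HGdb : forall sg, Rabs sg < sig0 -> / (2 * s1) <= Gd sg <= 2 / s1.
Hypothesis HGinc : forall a b, Rabs a < sig0 -> Rabs b < sig0 -> a < b -> G a < G b.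

Variable r : R.
Hypothesis Hr : 0 < r < sig0.

Lemma rc_bnd p : Rabs (r * cos p) < sig0.
Proof. rewrite Rabs_mult, (Rabs_right r) by lra. pose proof (COS_bound p).
assert (Rabs (cos p) <= 1) by (apply Rabs_le; lra). pose proof (Rabs_pos (cos p)). nra. Qed.

Definition w p := / sqrt 2 * Gd (r * cos p).
Definition mw := / sqrt 2 * / (2 * s1).

Lemma sqrt2_pos : 0 < sqrt 2. Proof. apply sqrt_lt_R0; lra. Qed.

Lemma mw_pos : 0 < mw.
Proof. unfold mw. apply Rmult_lt_0_compat; apply Rinv_0_lt_compat. apply sqrt2_pos. lra. Qed.

Lemma w_cont p : continuous w p.
Proof. unfold w. apply (continuous_scal_r (/ sqrt 2) (fun p => Gd (r * cos p))).
apply (continuous_comp (fun p => r * cos p) Gd). apply exd_cont; auto_derive; auto.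
apply HGdc, rc_bnd. Qed.

Lemma w_lb p : mw <= w p.
Proof. unfold w, mw. apply Rmult_le_compat_l. apply Rlt_le, Rinv_0_lt_compat, sqrt2_pos.
apply HGdb, rc_bnd. Qed.

Lemma w_per p : w (p + 2 * PI) = w p.
Proof. unfold w. rewrite cos_plus, cos_2PI, sin_2PI. f_equal. f_equal. ring. Qed.

Lemma w_int a b : ex_RInt w a b.
Proof. apply (@ex_RInt_continuous R_CompleteNormedModule w a b). intros; apply w_cont. Qed.

Definition F t := RInt w 0 t.

Lemma F_der t : is_derive F t (w t).
Proof. apply is_derive_RInt with 0. apply filter_forall. intros b. apply RInt_correct, w_int.
apply w_cont. Qed.

Lemma F_cont t : continuity_pt F t.
Proof. apply continuity_pt_filterlim. apply exd_cont. eexists. apply F_der. Qed.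

Lemma F_inc a b : a <= b -> mw * (b - a) <= F b - F a.
Proof. intros Hab. destruct (Req_dec a b) as [->|Hne]. lra.
destruct (MVT_gen F a b w) as [c [Hc1 Hc2]].
- intros; apply F_der.
- intros; apply F_cont.
- rewrite Hc2. pose proof (w_lb c). nra. Qed.

Lemma F0 : F 0 = 0.
Proof. unfold F. apply (@RInt_point R_CompleteNormedModule). Qed.

Definition P := F (2 * PI).

Lemma F_per t : F (t + 2 * PI) = F t + P.
Proof. unfold F, P.
rewrite <- (RInt_Chasles w 0 (2 * PI) (t + 2 * PI)) by apply w_int.
change (plus (RInt w 0 (2 * PI)) (RInt w (2 * PI) (t + 2 * PI))) with (RInt w 0 (2 * PI) + RInt w (2 * PI) (t + 2 * PI)).
assert (E : RInt w (2 * PI) (t + 2 * PI) = RInt w 0 t).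
{ replace (2 * PI) with (1 * 0 + 2 * PI) at 1 by ring. replace (t + 2 * PI) with (1 * t + 2 * PI) by ring.
  rewrite <- RInt_comp_lin. apply RInt_ext. intros x _.
  change (scal 1 (w (1 * x + 2 * PI))) with (1 * w (1 * x + 2 * PI)). rewrite !Rmult_1_l. rewrite w_per. auto.
  apply w_int. }
rewrite E. unfold F. apply Rplus_comm. Qed.

Lemma ex_theta t : exists th, F th = t.
Proof. pose proof mw_pos.
destruct (IVT_gen F (- (Rabs t / mw)) (Rabs t / mw) t) as [x [_ Hx]].
- intros y; apply F_cont.
- assert (A : Rabs t / mw - 0 = Rabs t / mw) by ring.
  pose proof (Rabs_pos t). assert (0 <= Rabs t / mw) by (apply Rmult_le_pos; [lra| apply Rlt_le, Rinv_0_lt_compat; lra]).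
  pose proof (F_inc 0 (Rabs t / mw) ltac:(lra)). pose proof (F_inc (- (Rabs t / mw)) 0 ltac:(lra)).
  rewrite F0 in *. replace (mw * (Rabs t / mw - 0)) with (Rabs t) in H2 by (field; lra).
  replace (mw * (0 - - (Rabs t / mw))) with (Rabs t) in H3 by (field; lra).
  pose proof (Rle_abs t). pose proof (Rle_abs (- t)). rewrite Rabs_Ropp in H5.
  rewrite Rmin_left, Rmax_right by lra. lra.
- exists x; auto. Qed.

Definition th t := proj1_sig (constructive_indefinite_description _ (ex_theta t)).
Lemma th_spec t : F (th t) = t.
Proof. unfold th. destruct (constructive_indefinite_description _ (ex_theta t)). simpl; auto. Qed.

Lemma F_inj a b : F a = F b -> a = b.
Proof. intros E. pose proof mw_pos. destruct (Rtotal_order a b) as [Hl|[Hl|Hl]]; auto.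
pose proof (F_inc a b ltac:(lra)). nra. pose proof (F_inc b a ltac:(lra)). nra. Qed.

Lemma th_lip a b : Rabs (th a - th b) <= Rabs (a - b) / mw.
Proof. pose proof mw_pos. apply Rmult_le_reg_l with mw; auto. replace (mw * (Rabs (a - b) / mw)) with (Rabs (a - b)) by (field; lra).
rewrite <- (Rabs_right mw) at 1 by lra. rewrite <- Rabs_mult.
destruct (Rle_dec (th a) (th b)).
- pose proof (F_inc _ _ r0) as H0. rewrite !th_spec in H0. assert (0 <= mw * (th b - th a)) by (apply Rmult_le_pos; lra).
  rewrite (Rabs_left1 (mw * (th a - th b))) by nra. rewrite (Rabs_left1 (a - b)) by lra. lra.
- pose proof (F_inc (th b) (th a) ltac:(lra)) as H0. rewrite !th_spec in H0. assert (0 <= mw * (th a - th b)) by (apply Rmult_le_pos; lra).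
  rewrite (Rabs_right (mw * (th a - th b))) by nra. rewrite (Rabs_right (a - b)) by lra. lra. Qed.

Lemma th_cont t : continuous th t.
Proof. apply continuity_pt_filterlim. intros eps He. pose proof mw_pos.
exists (eps * mw). split. nra. intros x [_ Hx]. change R in x. simpl in Hx. unfold R_dist in Hx. simpl. unfold R_dist.
eapply Rle_lt_trans. apply th_lip. apply Rmult_lt_reg_r with mw; auto. unfold Rdiv. rewrite Rmult_assoc, Rinv_l, Rmult_1_r by lra. auto. Qed.

Lemma th_der t : is_derive th t (/ w (th t)).
Proof. apply (inv_derive F th t (w (th t)) 1). lra. intros; apply th_spec. apply th_cont. apply F_der.
pose proof (w_lb (th t)); pose proof mw_pos; lra. Qed.

Lemma th0 : th 0 = 0.
Proof. apply F_inj. rewrite th_spec, F0; auto. Qed.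

Lemma th_per t : th (t + P) = th t + 2 * PI.
Proof. apply F_inj. rewrite th_spec, F_per, th_spec. auto. Qed.

Lemma P_pos : 0 < P.
Proof. pose proof (F_inc 0 (2 * PI) ltac:(pose proof PI_RGT_0; lra)). rewrite F0 in H. unfold P. pose proof mw_pos. pose proof PI_RGT_0. nra. Qed.

Lemma th_range S : 0 < S < P -> 0 < th S < 2 * PI.
Proof. intros HS. pose proof mw_pos. split.
- destruct (Rlt_dec 0 (th S)); auto. pose proof (F_inc (th S) 0 ltac:(lra)). rewrite th_spec, F0 in H0. nra.
- destruct (Rlt_dec (th S) (2 * PI)); auto. pose proof (F_inc (2 * PI) (th S) ltac:(lra)). rewrite th_spec in H0. fold P in H0. nra. Qed.

Variable V : R -> R.
Hypothesis HVG : forall sg, Rabs sg < sig0 -> Derive V (G sg) = 2 * sg / Gd sg.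

Definition xs t := G (r * cos (th t)).
Definition vs t := - sqrt 2 * r * sin (th t).

Lemma Gd_pos sg : Rabs sg < sig0 -> 0 < Gd sg.
Proof. intros H. destruct (HGdb sg H). assert (0 < / (2 * s1)) by (apply Rinv_0_lt_compat; lra). lra. Qed.

Lemma xs_der t : is_derive xs t (vs t).
Proof.
assert (H1 : is_derive cos (th t) (- sin (th t))) by (auto_derive; auto; ring).
assert (H2 := is_derive_comp cos th t _ _ H1 (th_der t)).
assert (H3 := is_derive_scal _ t r _ H2).
assert (H4 := is_derive_comp G (fun t => r * cos (th t)) t _ _ (HGder _ (rc_bnd (th t))) H3).
eapply is_derive_eq. apply H4. unfold vs, w. unfold scal; simpl; unfold mult; simpl.
pose proof (Gd_pos _ (rc_bnd (th t))). pose proof sqrt2_pos. field. lra. Qed.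

Lemma vs_der t : is_derive vs t (- Derive V (xs t)).
Proof.
assert (H1 : is_derive sin (th t) (cos (th t))) by (auto_derive; auto; ring).
assert (H2 := is_derive_comp sin th t _ _ H1 (th_der t)).
assert (H3 := is_derive_scal _ t (- sqrt 2 * r) _ H2).
eapply is_derive_eq. apply H3. unfold xs. rewrite HVG by apply rc_bnd. unfold w. unfold scal; simpl; unfold mult; simpl.
pose proof (Gd_pos _ (rc_bnd (th t))). pose proof sqrt2_pos.
assert (E : sqrt 2 * sqrt 2 = 2) by (apply sqrt_sqrt; lra).
set (q := sqrt 2) in *. rewrite <- E. field. lra. Qed.

Lemma sol_is : is_solution V (G r) xs vs.
Proof. unfold is_solution. split. apply xs_der. split. apply vs_der. split.
unfold xs. rewrite th0, cos_0, Rmult_1_r. auto.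
unfold vs. rewrite th0, sin_0. ring. Qed.

Lemma xs_per t : xs (t + P) = xs t.
Proof. unfold xs. rewrite th_per, cos_plus, cos_2PI, sin_2PI. f_equal. ring. Qed.

Lemma cos_lt1 x : 0 < x < 2 * PI -> cos x < 1.
Proof. intros H. replace x with (2 * (x / 2)) by field. rewrite cos_2a_sin.
assert (0 < sin (x/2)) by (apply sin_gt_0; lra). nra. Qed.

Lemma xs_notper S : 0 < S < P -> xs (0 + S) <> xs 0.
Proof. intros HS. rewrite Rplus_0_l. unfold xs. rewrite th0, cos_0, Rmult_1_r.
assert (C := cos_lt1 _ (th_range S HS)).
assert (Hlt : r * cos (th S) < r) by nra.
assert (HA : Rabs r < sig0) by (rewrite Rabs_right; lra).
pose proof (HGinc _ _ (rc_bnd (th S)) HA Hlt). lra. Qed.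

Lemma min_per T : minimal_period xs T -> T = P.
Proof. intros [HT [Hper Hmin]]. pose proof P_pos.
destruct (Rtotal_order T P) as [Hl|[Hl|Hl]]; auto.
- exfalso. apply (xs_notper T ltac:(lra)). apply Hper.
- exfalso. destruct (Hmin P ltac:(lra)) as [t Ht]. apply Ht, xs_per. Qed.

End Sol.

Definition Aprim (g1 g2 g3 g4 g5 r p : R) :=
  g1*p + 2*g2*r*sin p + 3*g3*r^2*((p + sin p * cos p)/2) + 4*g4*r^3*(sin p - sin p^3/3)
  + 5*g5*r^4*(3*p/8 + 3*sin p*cos p/8 + cos p^3 * sin p/4).

Lemma int_poly g1 g2 g3 g4 g5 r :
  RInt (fun p => ev (mkjet g1 (2*g2) (3*g3) (4*g4) (5*g5) 0) (r * cos p)) 0 (2*PI)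
  = 2*PI*g1 + 3*PI*g3*r^2 + 15*PI/4*g5*r^4.
Proof.
apply is_RInt_unique.
assert (H := is_RInt_derive (Aprim g1 g2 g3 g4 g5 r) (fun p => ev (mkjet g1 (2*g2) (3*g3) (4*g4) (5*g5) 0) (r * cos p)) 0 (2*PI)).
replace (2*PI*g1 + 3*PI*g3*r^2 + 15*PI/4*g5*r^4) with (minus (Aprim g1 g2 g3 g4 g5 r (2*PI)) (Aprim g1 g2 g3 g4 g5 r 0)).
apply H.
- intros x _. unfold Aprim. auto_derive. auto.
  assert (E : sin x ^ 2 + cos x ^ 2 = 1) by (pose proof (sin2_cos2 x); unfold Rsqr in H0; simpl; lra).
  unfold ev; simpl.
  match goal with |- ?a = ?b => change (@eq R a b) end. apply Rminus_diag_uniq.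
  transitivity ((1 - sin x ^ 2 - cos x ^ 2) * (3*g3*r^2/2 + 4*g4*r^3*cos x + 5*g5*r^4*(3/8 + 3*cos x^2/4))).
  field. rewrite <- E. field.
- intros x _. apply exd_cont. unfold ev; simpl. auto_derive. auto.
- unfold minus, plus, opp; simpl. unfold Aprim. rewrite sin_2PI, cos_2PI, sin_0, cos_0. field.
Qed.

Section Int.
Variables (G Gd V : R -> R) (sig0 s1 g1 g2 g3 g4 g5 alpha beta : R).
Hypothesis Hsig0 : 0 < sig0.
Hypothesis Hs1 : 0 < s1.
Hypothesis HGder : forall sg, Rabs sg < sig0 -> is_derive G sg (Gd sg).
Hypothesis HGdc : forall sg, Rabs sg < sig0 -> continuous Gd sg.
Hypothesis HGdb : forall sg, Rabs sg < sig0 -> / (2 * s1) <= Gd sg <= 2 / s1.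
Hypothesis HGinc : forall a b, Rabs a < sig0 -> Rabs b < sig0 -> a < b -> G a < G b.
Hypothesis HVG : forall sg, Rabs sg < sig0 -> Derive V (G sg) = 2 * sg / Gd sg.
Hypothesis HG0 : G 0 = 0.
Hypothesis HGb : forall sg, Rabs sg < sig0 -> Rabs (G sg) <= 2 / s1 * Rabs sg.
Hypothesis HGdj : approx 4 Gd (mkjet g1 (2*g2) (3*g3) (4*g4) (5*g5) 0).
Hypothesis Hab : alpha < 0 < beta.
Hypothesis Hiso : isochronous_center V alpha beta.

Lemma rc_bnd' r p : 0 < r < sig0 -> Rabs (r * cos p) <= r.
Proof. intros Hr. rewrite Rabs_mult, (Rabs_right r) by lra. pose proof (COS_bound p).
assert (Rabs (cos p) <= 1) by (apply Rabs_le; lra). pose proof (Rabs_pos (cos p)). nra. Qed.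

Lemma Gd_int r : 0 < r < sig0 -> ex_RInt (fun p => Gd (r * cos p)) 0 (2 * PI).
Proof. intros Hr. apply (@ex_RInt_continuous R_CompleteNormedModule). intros z _.
apply (continuous_comp (fun p => r * cos p) Gd). apply exd_cont; auto_derive; auto.
apply HGdc. pose proof (rc_bnd' r z Hr). lra. Qed.

Lemma ev_int r a : ex_RInt (fun p => ev a (r * cos p)) 0 (2 * PI).
Proof. apply (@ex_RInt_continuous R_CompleteNormedModule). intros z _.
apply exd_cont. unfold ev. auto_derive. auto. Qed.

Lemma P_formula r : 0 < r < sig0 -> P Gd r = / sqrt 2 * RInt (fun p => Gd (r * cos p)) 0 (2 * PI).
Proof. intros Hr. unfold P, F, w.
apply (RInt_scal (V := R_CompleteNormedModule) (fun p => Gd (r * cos p)) 0 (2 * PI) (/ sqrt 2)).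
apply Gd_int; auto. Qed.

Lemma per_const : exists T rho, 0 < rho /\ forall r, 0 < r < rho -> P Gd r = T.
Proof. destruct Hiso as [T [HT Hall]].
exists T, (Rmin sig0 (s1 * beta / 2)). split. apply Rmin_pos; auto. nra.
intros r Hr. assert (Hr' : 0 < r < sig0) by (split; [lra|]; eapply Rlt_le_trans; [apply Hr| apply Rmin_l]).
assert (Hrb : r < s1 * beta / 2) by (eapply Rlt_le_trans; [apply Hr| apply Rmin_r]).
assert (HA : Rabs r < sig0) by (rewrite Rabs_right; lra).
assert (HGp : 0 < G r). { rewrite <- HG0. apply HGinc; auto. rewrite Rabs_R0; auto. lra. }
assert (HGr : G r < beta). { pose proof (HGb r HA). rewrite Rabs_right in H by lra. rewrite Rabs_right in H by lra.
  apply Rle_lt_trans with (2 / s1 * r). auto. apply Rmult_lt_reg_l with (s1/2). lra.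
  replace (s1 / 2 * (2 / s1 * r)) with r by (field; lra). nra. }
destruct (Hall (G r) ltac:(unfold in_J; lra) ltac:(lra)) as [_ Hmin].
symmetry. apply (min_per G Gd sig0 s1 Hs1 HGdc HGdb HGinc r Hr'). apply (Hmin _ _ (sol_is G Gd sig0 s1 Hs1 HGder HGdc HGdb r Hr' V HVG)). Qed.

Lemma g3_g5 : g3 = 0 /\ g5 = 0.
Proof. destruct per_const as [T [rho0 [Hrho0 HT]]].
pose proof PI_RGT_0 as Hpi.
assert (K : forall eps, 0 < eps -> exists rho, 0 < rho /\ forall r, 0 < r < rho ->
   Rabs ((sqrt 2 * T - 2 * PI * g1) - (3 * PI * g3) * r^2 - (15 * PI / 4 * g5) * r^4) <= eps * r^4).
{ intros eps He. destruct (HGdj (eps / (2 * PI))) as [dd [Hdd Hb]]. apply Rdiv_lt_0_compat; lra.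
  exists (Rmin rho0 (Rmin dd sig0)). split. repeat apply Rmin_pos; auto.
  intros r Hr.
  assert (Hr0 : r < rho0) by (eapply Rlt_le_trans; [apply Hr| apply Rmin_l]).
  assert (Hr1 : r < dd) by (eapply Rlt_le_trans; [apply Hr|]; eapply Rle_trans; [apply Rmin_r|apply Rmin_l]).
  assert (Hr2 : r < sig0) by (eapply Rlt_le_trans; [apply Hr|]; eapply Rle_trans; [apply Rmin_r|apply Rmin_r]).
  assert (Hrr : 0 < r < sig0) by lra.
  specialize (HT r (conj (proj1 Hr) Hr0)). rewrite P_formula in HT by auto.
  assert (HI : RInt (fun p => Gd (r * cos p)) 0 (2 * PI) = sqrt 2 * T).
  { rewrite <- HT. rewrite <- Rmult_assoc, Rinv_r, Rmult_1_l. auto. apply Rgt_not_eq, sqrt_lt_R0; lra. }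
  set (Jt := mkjet g1 (2*g2) (3*g3) (4*g4) (5*g5) 0) in *.
  assert (HR := RInt_minus (V := R_CompleteNormedModule) (fun p => Gd (r * cos p)) (fun p => ev Jt (r * cos p)) 0 (2 * PI) (Gd_int r Hrr) (ev_int r Jt)).
  unfold Jt in HR. rewrite int_poly in HR. fold Jt in HR. rewrite HI in HR.
  change (minus (sqrt 2 * T) (2 * PI * g1 + 3 * PI * g3 * r ^ 2 + 15 * PI / 4 * g5 * r ^ 4)) with
     (sqrt 2 * T - (2 * PI * g1 + 3 * PI * g3 * r ^ 2 + 15 * PI / 4 * g5 * r ^ 4)) in HR.
  replace (sqrt 2 * T - 2 * PI * g1 - 3 * PI * g3 * r ^ 2 - 15 * PI / 4 * g5 * r ^ 4) with
     (sqrt 2 * T - (2 * PI * g1 + 3 * PI * g3 * r ^ 2 + 15 * PI / 4 * g5 * r ^ 4)) by ring.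
  rewrite <- HR.
  eapply Rle_trans. apply (abs_RInt_le_const _ 0 (2 * PI) (eps / (2 * PI) * r ^ 4)). lra.
  apply (@ex_RInt_minus R_NormedModule). apply Gd_int; auto. apply ev_int.
  intros t Ht. change (minus (Gd (r * cos t)) (ev Jt (r * cos t))) with (Gd (r * cos t) - ev Jt (r * cos t)).
  assert (Hc := rc_bnd' r t Hrr).
  eapply Rle_trans. apply Hb. lra. apply Rmult_le_compat_l. apply Rlt_le, Rdiv_lt_0_compat; lra.
  apply pow_incr. split. apply Rabs_pos. auto.
  right. field. lra. }
destruct (final_poly _ _ _ K) as [_ [Hb Hc]]. split. nra. nra. Qed.

End Int.


Theorem corollary2p3 (V : R -> R) (alpha beta : R) :
  admits_D6_at0 V ->
  V 0 = 0 -> Derive V 0 = 0 -> Derive_n V 2 0 > 0 ->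
  standing_J V alpha beta ->
  isochronous_center V alpha beta ->
  Derive_n V 4 0 = 5 * (Derive_n V 3 0) ^ 2 / (3 * Derive_n V 2 0) /\
  Derive_n V 6 0 =
    7 * Derive_n V 3 0 * Derive_n V 5 0 / Derive_n V 2 0
    - 140 * (Derive_n V 3 0) ^ 4 / (9 * (Derive_n V 2 0) ^ 3).
Proof.
intros Had HV0 HV1 HV2 HJ Hiso.
destruct Had as [[d [Hd HD]] HD6].
assert (HV2' : 0 < Derive_n V 2 0) by lra.
destruct (near1 V d Hd HD HD6 HV0 HV1 HV2') as [d1 [Hd1 [Hd1d Hn1]]].
destruct (near2 V d Hd HD HD6 HV0 HV1 HV2' d1 Hd1 Hn1) as [d2 [Hd2 [Hd21 Hn2]]].
destruct HJ as [Hab _].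
assert (Hg : g3 V = 0 /\ g5 V = 0).
{ apply (g3_g5 (G V d Hd HD HD6 HV0 HV1 HV2' d1 Hd1 Hd1d Hn1 d2 Hd2 Hd21)
               (Gd V d Hd HD HD6 HV0 HV1 HV2' d1 Hd1 Hd1d Hn1 d2 Hd2 Hd21) V
               (sig0 V d2) (s1 V) (g1 V) (g2 V) (g3 V) (g4 V) (g5 V) alpha beta).
  - apply (sig0_pos V d Hd HD HD6 HV0 HV1 HV2' d1 Hd1 Hd1d Hn1 d2 Hd2 Hd21 Hn2).
  - apply (s1_pos V HV2').
  - apply (G_der V d Hd HD HD6 HV0 HV1 HV2' d1 Hd1 Hd1d Hn1 d2 Hd2 Hd21 Hn2).
  - apply (Gd_cont V d Hd HD HD6 HV0 HV1 HV2' d1 Hd1 Hd1d Hn1 d2 Hd2 Hd21 Hn2).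
  - apply (Gd_bnd V d Hd HD HD6 HV0 HV1 HV2' d1 Hd1 Hd1d Hn1 d2 Hd2 Hd21 Hn2).
  - apply (G_inc V d Hd HD HD6 HV0 HV1 HV2' d1 Hd1 Hd1d Hn1 d2 Hd2 Hd21 Hn2).
  - apply (V_der_G V d Hd HD HD6 HV0 HV1 HV2' d1 Hd1 Hd1d Hn1 d2 Hd2 Hd21 Hn2).
  - apply (G0 V d Hd HD HD6 HV0 HV1 HV2' d1 Hd1 Hd1d Hn1 d2 Hd2 Hd21 Hn2).
  - apply (G_bnd V d Hd HD HD6 HV0 HV1 HV2' d1 Hd1 Hd1d Hn1 d2 Hd2 Hd21 Hn2).
  - apply (approx_Gd V d Hd HD HD6 HV0 HV1 HV2' d1 Hd1 Hd1d Hn1 d2 Hd2 Hd21 Hn2).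
  - exact Hab.
  - exact Hiso. }
destruct Hg as [Hg3 Hg5].
pose proof (s1_pos V HV2') as Hs1.
change (Derive_n V 2 0) with (cc V 2). change (Derive_n V 3 0) with (cc V 3).
change (Derive_n V 4 0) with (cc V 4). change (Derive_n V 5 0) with (cc V 5).
change (Derive_n V 6 0) with (cc V 6).
rewrite (R2 V HV2'), (R3 V HV2'), (R4 V HV2'), (R5 V HV2'), (R6 V HV2').
unfold g3, gg3 in Hg3. unfold g5, gg5 in Hg5.
set (a1 := s1 V) in *. set (a2 := s2 V) in *. set (a3 := s3 V) in *. set (a4 := s4 V) in *. set (a5 := s5 V) in *.
assert (E3 : a3 = 2 * a2^2 / a1).
{ assert (Hn : 2 * a2^2 - a1 * a3 = 0).
  { unfold Rdiv in Hg3. apply Rmult_integral in Hg3. destruct Hg3 as [Hg3|Hg3]; auto.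
    exfalso. revert Hg3. apply Rinv_neq_0_compat, pow_nonzero. lra. }
  apply Rmult_eq_reg_l with a1. 2: lra. field_simplify. 2: lra. lra. }
assert (E5 : a5 = (14 * a2^4 - 21 * a1 * a2^2 * a3 + 3 * a1^2 * a3^2 + 6 * a1^2 * a2 * a4) / a1^3).
{ assert (Hn : 14 * a2^4 - 21 * a1 * a2^2 * a3 + 3 * a1^2 * a3^2 + 6 * a1^2 * a2 * a4 - a1^3 * a5 = 0).
  { unfold Rdiv in Hg5. apply Rmult_integral in Hg5. destruct Hg5 as [Hg5|Hg5]; auto.
    exfalso. revert Hg5. apply Rinv_neq_0_compat, pow_nonzero. lra. }
  apply Rmult_eq_reg_l with (a1^3). 2: apply pow_nonzero; lra.
  field_simplify. 2: lra. lra. }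
rewrite E5, E3. split; field; lra.
Qed.
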